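(* Consider $CP(N)$ with multiplicative rates $\psi(i,j)=2ij$, started from $(N,0,\dots,0)$. Define functions $b_k(t)$, $t\ge0$, $k\ge1$, by $b_1(t)=e^t$ and $$b_k(t)=k\,e^{k^2t}\int_0^t e^{-k^2u}\sum_{i+j=k}b_i(u)b_j(u)\,du,\qquad k\ge2,$$ (sum over ordered pairs of positive integers). These functions do not depend on $N$, and for every $N\ge1$, $t\ge0$ and $\eta=(n_1,\dots,n_N)\in\Omega_N$, $$\mathbb P(X_N^{(\rho)}(t)=\eta)=N!\,e^{-N^2t}\prod_{k=1}^N\frac{(b_k(t))^{n_k}}{k^{n_k}n_k!}.$$
   Context: $\Omega_N$ is the set of partitions $\eta=(n_1,\dots,n_N)$ of $N$ ($\sum_k kn_k=N$). $CP(N)$ is the continuous-time Markov chain on $\Omega_N$ where any two distinct clusters of sizes $i,j$ merge into one of size $i+j$ at rate $\psi(i,j)$; the transition $\eta\to\eta^{(i,j)}$ has rate $n_in_j\psi(i,j)$ for $i\neq j$ and $\frac{n_i(n_i-1)}2\psi(i,i)$ for $i=j$. *)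

(* Defs.v *)
From Stdlib Require Import Reals Lra Lia List Arith.
Import ListNotations.
Open Scope R_scope.

Fixpoint sumR (f : nat -> R) (n : nat) : R :=
  match n with O => 0 | S n' => sumR f n' + f n' end.
Fixpoint prodR (f : nat -> R) (n : nat) : R :=
  match n with O => 1 | S n' => prodR f n' * f n' end.

(* A state eta = (n_1,...,n_N) is the list [n_1; ...; n_N];
   n_k = nth (k-1) eta 0. *)
Definition nk (eta : list nat) (k : nat) : nat := nth (k - 1) eta 0%nat.

Definition weight (eta : list nat) : nat :=
  fold_right Nat.add 0%nat (map (fun k => k * nk eta k)%nat (seq 1 (length eta))).

Definition in_Omega (N : nat) (eta : list nat) : Prop :=
  length eta = N /\ weight eta = N.

Fixpoint all_lists (n m : nat) : list (list nat) :=
  match n with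
  | O => [[]]
  | S n' => flat_map (fun x => map (cons x) (all_lists n' m)) (seq 0 (S m))
  end.

Definition Omega (N : nat) : list (list nat) :=
  filter (fun eta => Nat.eqb (weight eta) N) (all_lists N N).

Definition sum_list (l : list (list nat)) (f : list nat -> R) : R :=
  fold_right Rplus 0 (map f l).

Fixpoint modify (f : nat -> nat) (k : nat) (l : list nat) : list nat :=
  match l, k with
  | [], _ => []
  | x :: l', O => f x :: l'
  | x :: l', S k' => x :: modify f k' l'
  end.

(* eta^{(i,j)}: one cluster of size i and one of size j merge into size i+j *)
Definition merge (eta : list nat) (i j : nat) : list nat :=
  modify S (i + j - 1) (modify pred (j - 1) (modify pred (i - 1) eta)).

(* rate of eta -> eta^{(i,j)}, for i <= j *)
Definition rate (psi : nat -> nat -> R) (eta : list nat) (i j : nat) : R :=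
  if Nat.eq_dec i j
  then INR (nk eta i) * (INR (nk eta i) - 1) / 2 * psi i i
  else INR (nk eta i) * INR (nk eta j) * psi i j.

Definition pair_ok (N i j : nat) : bool :=
  (Nat.leb 1 i && Nat.leb i j && Nat.leb (i + j) N)%bool.

Definition sum_pairs (N : nat) (F : nat -> nat -> R) : R :=
  sumR (fun i => sumR (fun j => if pair_ok N i j then F i j else 0) (S N)) (S N).

Definition ind_eq (a b : list nat) : R :=
  if list_eq_dec Nat.eq_dec a b then 1 else 0.

Definition Qgen (psi : nat -> nat -> R) (N : nat) (xi eta : list nat) : R :=
  sum_pairs N (fun i j => rate psi xi i j * ind_eq (merge xi i j) eta)
  - ind_eq xi eta * sum_pairs N (fun i j => rate psi xi i j).

Definition init_state (N : nat) : list nat := N :: repeat 0%nat (N - 1).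

(* p t eta = P(X_N(t) = eta): the transition probabilities from the initial
   state, characterised as the (unique) solution of the Kolmogorov forward
   equations p' = p Q on the finite state space Omega_N, p(0) = delta_init. *)
Definition is_law (psi : nat -> nat -> R) (N : nat) (eta0 : list nat)
  (p : R -> list nat -> R) : Prop :=
  (forall eta, In eta (Omega N) -> p 0 eta = ind_eq eta eta0) /\
  (forall eta t, In eta (Omega N) ->
     derivable_pt_lim (fun s => p s eta) t
       (sum_list (Omega N) (fun xi => p t xi * Qgen psi N xi eta))).

Definition psi_mult (i j : nat) : R := 2 * INR i * INR j.

Definition b_integrand (b : nat -> R -> R) (k : nat) (u : R) : R :=
  exp (- (INR k ^ 2) * u) *
  sumR (fun i => if Nat.leb 1 i then b i u * b (k - i)%nat u else 0) k.

Definition is_b (b : nat -> R -> R) : Prop :=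
  (forall t, 0 <= t -> b 1%nat t = exp t) /\
  (forall k t, (2 <= k)%nat -> 0 <= t ->
     exists pr : Riemann_integrable (b_integrand b k) 0 t,
       b k t = INR k * exp (INR k ^ 2 * t) * RiemannInt pr).

(* Main.v *)
Require Import Defs.
From Stdlib Require Import Reals Lra Lia List Arith Bool Classical.
Import ListNotations.
Open Scope R_scope.


Lemma sumR_S f n : sumR f (S n) = sumR f n + f n.
Proof. reflexivity. Qed.
Lemma prodR_S f n : prodR f (S n) = prodR f n * f n.
Proof. reflexivity. Qed.

Lemma sumR_ext f g n : (forall i, (i < n)%nat -> f i = g i) -> sumR f n = sumR g n.
Proof.
  induction n; intros H; simpl; auto.
  rewrite IHn, H; auto; intros; apply H; lia.
Qed.

Lemma prodR_ext f g n : (forall i, (i < n)%nat -> f i = g i) -> prodR f n = prodR g n.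
Proof.
  induction n; intros H; simpl; auto.
  rewrite IHn, H; auto; intros; apply H; lia.
Qed.

Lemma sumR_plus f g n : sumR (fun i => f i + g i) n = sumR f n + sumR g n.
Proof. induction n; simpl; [lra|]. rewrite IHn; lra. Qed.

Lemma sumR_scal c f n : sumR (fun i => c * f i) n = c * sumR f n.
Proof. induction n; simpl; [lra|]. rewrite IHn; lra. Qed.

Lemma sumR_scal_r c f n : sumR (fun i => f i * c) n = sumR f n * c.
Proof. induction n; simpl; [lra|]. rewrite IHn; lra. Qed.

Lemma sumR_zero f n : (forall i, (i < n)%nat -> f i = 0) -> sumR f n = 0.
Proof. intros H. rewrite (sumR_ext f (fun _ => 0)); auto. induction n; simpl; auto. rewrite IHn; [lra|]. intros; apply H; lia. Qed.

Lemma sumR_abs_bound f n c : (forall i, (i < n)%nat -> Rabs (f i) <= c) -> Rabs (sumR f n) <= INR n * c.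
Proof.
  induction n; intros H; simpl sumR.
  - simpl; rewrite Rabs_R0; lra.
  - rewrite S_INR. eapply Rle_trans; [apply Rabs_triang|].
    assert (Rabs (sumR f n) <= INR n * c) by (apply IHn; intros; apply H; lia).
    assert (Rabs (f n) <= c) by (apply H; lia). lra.
Qed.

Lemma sumR_swap (f : nat -> nat -> R) n m :
  sumR (fun i => sumR (fun j => f i j) m) n = sumR (fun j => sumR (fun i => f i j) n) m.
Proof.
  induction n; simpl.
  - symmetry; apply sumR_zero; auto.
  - rewrite IHn, <- sumR_plus. reflexivity.
Qed.

Lemma sumR_single (g : nat -> R) c n : (c < n)%nat ->
  sumR (fun j => if Nat.eq_dec j c then g j else 0) n = g c.
Proof.
  induction n; intros H; [lia|]. simpl.
  destruct (Nat.eq_dec n c).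
  - subst. rewrite sumR_zero; [destruct (Nat.eq_dec c c); [lra|lia]|]. intros i Hi. destruct (Nat.eq_dec i c); [lia|auto].
  - destruct (Nat.eq_dec n c); [lia|]. rewrite IHn; [lra|lia].
Qed.

Lemma sum_list_sumR (l : list (list nat)) (f : list nat -> nat -> R) n :
  sum_list l (fun x => sumR (fun i => f x i) n) = sumR (fun i => sum_list l (fun x => f x i)) n.
Proof.
  induction l as [|a l IH]; unfold sum_list in *; simpl.
  - symmetry; apply sumR_zero; auto.
  - rewrite IH, <- sumR_plus. reflexivity.
Qed.

Lemma sumR_derive (F : R -> nat -> R) (F' : nat -> R) n t :
  (forall i, (i < n)%nat -> derivable_pt_lim (fun s => F s i) t (F' i)) ->
  derivable_pt_lim (fun s => sumR (F s) n) t (sumR F' n).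
Proof.
  induction n; intros H; simpl.
  - apply derivable_pt_lim_const.
  - apply (derivable_pt_lim_plus (fun s => sumR (F s) n) (fun s => F s n)).
    + apply IHn; intros; apply H; lia.
    + apply H; lia.
Qed.

Lemma sumR_cont (F : R -> nat -> R) n t :
  (forall i, (i < n)%nat -> continuity_pt (fun s => F s i) t) ->
  continuity_pt (fun s => sumR (F s) n) t.
Proof.
  induction n; intros H; simpl.
  - apply continuity_pt_const. intros ? ?; reflexivity.
  - apply (continuity_pt_plus (fun s => sumR (F s) n) (fun s => F s n)).
    + apply IHn; intros; apply H; lia.
    + apply H; lia.
Qed.

Lemma prodR_cont (F : R -> nat -> R) n t :
  (forall i, (i < n)%nat -> continuity_pt (fun s => F s i) t) ->
  continuity_pt (fun s => prodR (F s) n) t.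
Proof.
  induction n; intros H; simpl.
  - apply continuity_pt_const. intros ? ?; reflexivity.
  - apply (continuity_pt_mult (fun s => prodR (F s) n) (fun s => F s n)).
    + apply IHn; intros; apply H; lia.
    + apply H; lia.
Qed.

Lemma prodR_derive (F : R -> nat -> R) (F' : nat -> R) n t :
  (forall i, (i < n)%nat -> derivable_pt_lim (fun s => F s i) t (F' i)) ->
  derivable_pt_lim (fun s => prodR (F s) n) t
    (sumR (fun m => prodR (fun k => if Nat.eq_dec k m then F' k else F t k) n) n).
Proof.
  induction n; intros H; simpl.
  - apply derivable_pt_lim_const.
  - replace (sumR (fun m => prodR (fun k => if Nat.eq_dec k m then F' k else F t k) n *
                (if Nat.eq_dec n m then F' n else F t n)) n +
             prodR (fun k => if Nat.eq_dec k n then F' k else F t k) n *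
             (if Nat.eq_dec n n then F' n else F t n))
      with (sumR (fun m => prodR (fun k => if Nat.eq_dec k m then F' k else F t k) n) n * F t n
            + prodR (F t) n * F' n).
    + apply (derivable_pt_lim_mult (fun s => prodR (F s) n) (fun s => F s n)).
      * apply IHn; intros; apply H; lia.
      * apply H; lia.
    + rewrite <- sumR_scal_r. f_equal.
      * apply sumR_ext; intros i Hi. destruct (Nat.eq_dec n i); [lia|auto].
      * destruct (Nat.eq_dec n n); [|lia]. f_equal. apply prodR_ext; intros i Hi.
        destruct (Nat.eq_dec i n); [lia|auto].
Qed.

Lemma prodR_split f n m : (m < n)%nat ->
  prodR f n = f m * prodR (fun k => if Nat.eq_dec k m then 1 else f k) n.
Proof.
  induction n; intros H; [lia|]. simpl.
  destruct (Nat.eq_dec n m).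
  - subst. rewrite (prodR_ext (fun k => if Nat.eq_dec k m then 1 else f k) f); [ring|].
    intros i Hi; destruct (Nat.eq_dec i m); [lia|auto].
  - rewrite (IHn ltac:(lia)). ring.
Qed.

Lemma prodR_zero f n m : (m < n)%nat -> f m = 0 -> prodR f n = 0.
Proof. intros H H0. rewrite (prodR_split f n m H), H0. ring. Qed.

Lemma prodR_one f n : (forall i, (i < n)%nat -> f i = 1) -> prodR f n = 1.
Proof. induction n; intros H; simpl; auto. rewrite IHn, H; try lra; try lia. intros; apply H; lia. Qed.


Lemma sum_list_nil f : sum_list [] f = 0.
Proof. reflexivity. Qed.
Lemma sum_list_cons a l f : sum_list (a :: l) f = f a + sum_list l f.
Proof. reflexivity. Qed.

Lemma sum_list_ext l f g : (forall x, In x l -> f x = g x) -> sum_list l f = sum_list l g.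
Proof.
  induction l as [|a l IH]; intros H; [reflexivity|].
  rewrite !sum_list_cons, H, IH; simpl; auto; intros; apply H; simpl; auto.
Qed.

Lemma sum_list_plus l f g : sum_list l (fun x => f x + g x) = sum_list l f + sum_list l g.
Proof. induction l; unfold sum_list in *; simpl; [lra|]. rewrite IHl; lra. Qed.

Lemma sum_list_scal l c f : sum_list l (fun x => c * f x) = c * sum_list l f.
Proof. induction l; unfold sum_list in *; simpl; [lra|]. rewrite IHl; lra. Qed.

Lemma sum_list_zero l : sum_list l (fun _ => 0) = 0.
Proof. induction l; unfold sum_list in *; simpl; [lra|]. rewrite IHl; lra. Qed.

Lemma sum_list_const l c : sum_list l (fun _ => c) = INR (length l) * c.
Proof. induction l; unfold sum_list in *; simpl length; [simpl; lra|].
  rewrite S_INR; simpl; rewrite IHl; lra. Qed.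

Lemma sum_list_le l f g : (forall x, In x l -> f x <= g x) -> sum_list l f <= sum_list l g.
Proof.
  induction l as [|a l IH]; intros H; unfold sum_list in *; simpl; [lra|].
  apply Rplus_le_compat; [apply H; simpl; auto| apply IH; intros; apply H; simpl; auto].
Qed.

Lemma sum_list_nonneg l f : (forall x, In x l -> 0 <= f x) -> 0 <= sum_list l f.
Proof. intros H. rewrite <- (sum_list_zero l). apply sum_list_le; auto. Qed.

Lemma sum_list_ge_term l f x : (forall y, In y l -> 0 <= f y) -> In x l -> f x <= sum_list l f.
Proof.
  induction l as [|a l IH]; intros H Hx; [destruct Hx|].
  rewrite sum_list_cons. destruct Hx as [<-|Hx].
  - assert (0 <= sum_list l f) by (apply sum_list_nonneg; intros; apply H; simpl; auto). lra.
  - assert (0 <= f a) by (apply H; simpl; auto). assert (f x <= sum_list l f) by (apply IH; auto; intros; apply H; simpl; auto). lra.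
Qed.

Lemma sum_list_zero_each l f : (forall y, In y l -> 0 <= f y) -> sum_list l f = 0 -> forall x, In x l -> f x = 0.
Proof.
  intros H H0 x Hx. pose proof (sum_list_ge_term l f x H Hx). pose proof (H x Hx). lra.
Qed.

Lemma sum_list_swap (l m : list (list nat)) (f : list nat -> list nat -> R) :
  sum_list l (fun x => sum_list m (fun y => f x y)) = sum_list m (fun y => sum_list l (fun x => f x y)).
Proof.
  induction l as [|a l IH]; simpl.
  - symmetry. apply sum_list_zero.
  - unfold sum_list at 1; simpl. fold (sum_list l (fun x => sum_list m (fun y => f x y))).
    rewrite IH. rewrite <- sum_list_plus. reflexivity.
Qed.

Lemma sum_list_derive l (f : R -> list nat -> R) (f' : list nat -> R) t :
  (forall x, In x l -> derivable_pt_lim (fun s => f s x) t (f' x)) ->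
  derivable_pt_lim (fun s => sum_list l (fun x => f s x)) t (sum_list l f').
Proof.
  induction l as [|a l IH]; intros H.
  - unfold sum_list; simpl. apply derivable_pt_lim_const.
  - unfold sum_list; simpl.
    apply (derivable_pt_lim_plus (fun s => f s a) (fun s => fold_right Rplus 0 (map (fun x => f s x) l))).
    + apply H; simpl; auto.
    + apply IH; intros; apply H; simpl; auto.
Qed.

Lemma sum_list_cont l (f : R -> list nat -> R) t :
  (forall x, In x l -> continuity_pt (fun s => f s x) t) ->
  continuity_pt (fun s => sum_list l (fun x => f s x)) t.
Proof.
  induction l as [|a l IH]; intros H.
  - unfold sum_list; simpl. apply continuity_pt_const. intros ? ?; reflexivity.
  - unfold sum_list; simpl.
    apply (continuity_pt_plus (fun s => f s a) (fun s => fold_right Rplus 0 (map (fun x => f s x) l))).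
    + apply H; simpl; auto.
    + apply IH; intros; apply H; simpl; auto.
Qed.

Lemma dexp_lin a c : derivable_pt_lim (fun s => exp (a * s)) c (a * exp (a * c)).
Proof.
  replace (a * exp (a * c)) with (exp (a * c) * (a * 1)) by ring.
  apply (derivable_pt_lim_comp (fun s => a * s) exp).
  - apply (derivable_pt_lim_scal (fun s => s)). apply derivable_pt_lim_id.
  - apply derivable_pt_lim_exp.
Qed.

Lemma ode_uniq (L : list (list nat)) (A : list nat -> list nat -> R) (d : R -> list nat -> R) :
  (forall x c, In x L -> 0 < c ->
     derivable_pt_lim (fun s => d s x) c (sum_list L (fun y => d c y * A y x))) ->
  (forall x, In x L -> continuity_pt (fun s => d s x) 0) ->
  (forall x, In x L -> d 0 x = 0) ->
  forall x t, In x L -> 0 <= t -> d t x = 0.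
Proof.
  intros Hd Hc H0 x t Hx Ht.
  set (K0 := sum_list L (fun y => sum_list L (fun z => Rabs (A y z)))).
  set (n := INR (length L)).
  set (K := 2 * n * K0).
  set (E := fun s => sum_list L (fun z => d s z * d s z)).
  set (E' := fun c => sum_list L (fun z => 2 * d c z * sum_list L (fun y => d c y * A y z))).
  assert (HE : forall c, 0 < c -> derivable_pt_lim E c (E' c)).
  { intros c Hc0. unfold E, E'. apply sum_list_derive. intros z Hz.
    replace (2 * d c z * sum_list L (fun y => d c y * A y z)) with
      (sum_list L (fun y => d c y * A y z) * d c z + d c z * sum_list L (fun y => d c y * A y z)) by ring.
    apply (derivable_pt_lim_mult (fun s => d s z) (fun s => d s z)); apply Hd; auto. }
  assert (HK0 : forall y z, In y L -> In z L -> Rabs (A y z) <= K0).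
  { intros y z Hy Hz. unfold K0.
    apply Rle_trans with (sum_list L (fun z0 => Rabs (A y z0))).
    - apply sum_list_ge_term with (f := fun z0 => Rabs (A y z0)); auto. intros; apply Rabs_pos.
    - apply sum_list_ge_term with (f := fun y0 => sum_list L (fun z0 => Rabs (A y0 z0))); auto.
      intros; apply sum_list_nonneg; intros; apply Rabs_pos. }
  assert (HEb : forall c, E' c <= K * E c).
  { intros c. unfold E'.
    apply Rle_trans with (sum_list L (fun z => sum_list L (fun y => (d c z * d c z + d c y * d c y) * K0))).
    - apply sum_list_le; intros z Hz. rewrite Rmult_assoc, <- sum_list_scal, <- sum_list_scal.
      apply sum_list_le; intros y Hy.
      pose proof (HK0 y z Hy Hz).
      assert (2 * (d c z * (d c y * A y z)) <= 2 * Rabs (d c z * d c y) * Rabs (A y z)).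
      { rewrite Rmult_assoc, <- Rabs_mult. replace (2 * (d c z * (d c y * A y z))) with (2 * ((d c z * d c y) * A y z)) by ring.
        apply Rmult_le_compat_l; [lra|]. apply Rle_abs. }
      assert (2 * Rabs (d c z * d c y) <= d c z * d c z + d c y * d c y).
      { pose proof (Rle_0_sqr (d c z - d c y)); pose proof (Rle_0_sqr (d c z + d c y)); unfold Rsqr in *.
        unfold Rabs; destruct (Rcase_abs (d c z * d c y)); nra. }
      assert (0 <= Rabs (A y z)) by apply Rabs_pos.
      assert (0 <= 2 * Rabs (d c z * d c y)) by (pose proof (Rabs_pos (d c z * d c y)); lra).
      nra.
    - unfold K, E. 
      assert (HS : sum_list L (fun z => sum_list L (fun y => (d c z * d c z + d c y * d c y) * K0))
         = K0 * (n * sum_list L (fun z => d c z * d c z) + n * sum_list L (fun z => d c z * d c z))).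
      { set (S := sum_list L (fun z => d c z * d c z)).
        rewrite (sum_list_ext L _ (fun z => (n * K0) * (d c z * d c z) + K0 * S)).
        - rewrite sum_list_plus, sum_list_const, sum_list_scal. fold n. fold S. ring.
        - intros z Hz. rewrite (sum_list_ext L _ (fun y => K0 * (d c z * d c z) + K0 * (d c y * d c y))).
          2:{ intros; ring. }
          rewrite sum_list_plus, sum_list_const, sum_list_scal. fold n. fold S. ring. }
      rewrite HS. right. ring. }
  assert (HEnn : forall s, 0 <= E s).
  { intros s; apply sum_list_nonneg; intros; apply Rle_0_sqr. }
  set (F := fun s => exp (- K * s) * E s).
  assert (HF : forall c, 0 < c -> derivable_pt_lim F c (exp (- K * c) * (E' c - K * E c))).
  { intros c Hc0. unfold F.
    replace (exp (- K * c) * (E' c - K * E c)) with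
      (- K * exp (- K * c) * E c + exp (- K * c) * E' c) by ring.
    apply (derivable_pt_lim_mult (fun s => exp (- K * s)) E).
    - apply dexp_lin.
    - apply HE; auto. }
  assert (HF0 : F 0 = 0).
  { unfold F, E. rewrite (sum_list_ext L _ (fun _ => 0)). rewrite sum_list_zero; ring.
    intros z Hz; rewrite H0; auto; ring. }
  assert (HFt : F t <= 0).
  { destruct (Req_dec t 0) as [->|Htn]; [lra|].
    assert (Htp : 0 < t) by lra.
    assert (pr1 : forall c, 0 < c < t -> derivable_pt F c).
    { intros c Hc0. exists (exp (- K * c) * (E' c - K * E c)). apply HF; lra. }
    assert (pr2 : forall c, 0 < c < t -> derivable_pt id c).
    { intros c Hc0. exists 1. apply derivable_pt_lim_id. }
    assert (HcF : forall c, 0 <= c <= t -> continuity_pt F c).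
    { intros c Hc0. destruct (Req_dec c 0) as [->|Hcn].
      - unfold F. apply (continuity_pt_mult (fun s => exp (- K * s)) E).
        + apply derivable_continuous_pt. exists (- K * exp (- K * 0)). apply dexp_lin.
        + unfold E. apply sum_list_cont. intros z Hz.
          apply (continuity_pt_mult (fun s => d s z) (fun s => d s z)); apply Hc; auto.
      - apply derivable_continuous_pt. exists (exp (- K * c) * (E' c - K * E c)). apply HF; lra. }
    assert (Hcid : forall c, 0 <= c <= t -> continuity_pt id c).
    { intros; apply derivable_continuous_pt, derivable_pt_id. }
    destruct (MVT F id 0 t pr1 pr2 Htp HcF Hcid) as [c [P HP]].
    assert (Hd1 : derive_pt F c (pr1 c P) = exp (- K * c) * (E' c - K * E c)).
    { apply derive_pt_eq_0. apply HF; lra. }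
    assert (Hd2 : derive_pt id c (pr2 c P) = 1).
    { apply derive_pt_eq_0. apply derivable_pt_lim_id. }
    rewrite Hd1, Hd2 in HP. unfold id in HP. rewrite HF0 in HP.
    assert (exp (- K * c) * (E' c - K * E c) <= 0).
    { pose proof (exp_pos (- K * c)). pose proof (HEb c). nra. }
    nra. }
  assert (HEt : E t = 0).
  { pose proof (HEnn t). unfold F in HFt. pose proof (exp_pos (- K * t)).
    assert (E t <= 0).
    { destruct (Rle_dec (E t) 0); auto. nra. }
    lra. }
  assert (Hsq : d t x * d t x = 0).
  { apply (sum_list_zero_each L (fun z => d t z * d t z)); auto. intros; apply Rle_0_sqr. }
  nra.
Qed.


Definition Sb (b : nat -> R -> R) (k : nat) (u : R) : R :=
  sumR (fun i => if Nat.leb 1 i then b i u * b (k - i)%nat u else 0) k.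

Lemma exp_mono_le x y : x <= y -> exp x <= exp y.
Proof. intros [H|H]; [left; apply exp_increasing; auto| subst; lra]. Qed.

Lemma lip_cont f x L : 0 <= L ->
  (forall s, Rabs (s - x) < 1 -> Rabs (f s - f x) <= L * Rabs (s - x)) -> continuity_pt f x.
Proof.
  intros HL H eps Heps. exists (Rmin 1 (eps / (L + 1))). split.
  - apply Rmin_pos; [lra|]. apply Rdiv_lt_0_compat; lra.
  - intros y [_ Hy]. simpl in *. unfold Rdist in *.
    assert (Hy1 : Rabs (y - x) < 1) by (eapply Rlt_le_trans; [apply Hy| apply Rmin_l]).
    assert (Hy2 : Rabs (y - x) < eps / (L + 1)) by (eapply Rlt_le_trans; [apply Hy| apply Rmin_r]).
    eapply Rle_lt_trans; [apply H; auto|].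
    pose proof (Rabs_pos (y - x)).
    apply Rle_lt_trans with ((L + 1) * Rabs (y - x)); [nra|].
    apply Rlt_le_trans with ((L + 1) * (eps / (L + 1))); [apply Rmult_lt_compat_l; lra|].
    right; field; lra.
Qed.

Lemma Sb_bound b k M u : 0 <= M ->
  (forall i, (1 <= i < k)%nat -> Rabs (b i u) <= M) ->
  Rabs (Sb b k u) <= INR k * (M * M).
Proof.
  intros HM H. unfold Sb. apply sumR_abs_bound. intros i Hi.
  destruct (Nat.leb 1 i) eqn:E.
  - apply Nat.leb_le in E. rewrite Rabs_mult.
    apply Rmult_le_compat; try apply Rabs_pos; apply H; lia.
  - rewrite Rabs_R0. nra.
Qed.

Lemma int_bound b k M : is_b b -> (2 <= k)%nat -> 0 <= M ->
  (forall i s, (1 <= i < k)%nat -> 0 <= s <= 1 -> Rabs (b i s) <= M) ->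
  forall s, 0 <= s <= 1 -> Rabs (b k s) <= INR k * exp (INR k ^ 2) * (INR k * (M * M)) * s.
Proof.
  intros [Hb1 Hb2] Hk HM H s Hs.
  destruct (Hb2 k s Hk (proj1 Hs)) as [pr Hpr]. rewrite Hpr.
  set (C := INR k * (M * M)).
  assert (HC : 0 <= C) by (unfold C; pose proof (pos_INR k); nra).
  assert (HI : -C * (s - 0) <= RiemannInt pr <= C * (s - 0)).
  { apply RiemannInt_const_bound; [lra|]. intros x Hx.
    unfold b_integrand. fold (Sb b k x).
    assert (Rabs (Sb b k x) <= C) by (apply Sb_bound; auto; intros; apply H; auto; lra).
    assert (0 < exp (- (INR k ^ 2) * x) <= 1).
    { split; [apply exp_pos|]. rewrite <- exp_0. apply exp_mono_le.
      pose proof (pos_INR k). assert (0 <= INR k ^ 2) by (apply pow_le; lra). nra. }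
    revert H0; unfold Rabs; destruct (Rcase_abs (Sb b k x)); intros; nra. }
  assert (Habs : Rabs (RiemannInt pr) <= C * s) by (apply Rabs_le; lra).
  rewrite !Rabs_mult. rewrite (Rabs_right (exp _)) by (left; apply exp_pos).
  rewrite Rabs_right by (apply Rle_ge, pos_INR).
  assert (exp (INR k ^ 2 * s) <= exp (INR k ^ 2)).
  { apply exp_mono_le. assert (0 <= INR k ^ 2) by (apply pow_le, pos_INR). nra. }
  pose proof (pos_INR k). pose proof (exp_pos (INR k ^ 2 * s)). pose proof (Rabs_pos (RiemannInt pr)).
  apply Rle_trans with (INR k * exp (INR k ^ 2) * Rabs (RiemannInt pr)).
  - apply Rmult_le_compat_r; auto. apply Rmult_le_compat_l; auto.
  - fold C. replace (INR k * exp (INR k ^ 2) * C * s) with (INR k * exp (INR k ^ 2) * (C * s)) by ring.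
    apply Rmult_le_compat_l; [pose proof (exp_pos (INR k ^2)); nra|]. lra.
Qed.

Lemma bound_unif b : is_b b -> forall k, exists M, 0 <= M /\
  forall i s, (1 <= i <= k)%nat -> 0 <= s <= 1 -> Rabs (b i s) <= M.
Proof.
  intros Hb k. induction k as [|k [M [HM IH]]].
  - exists 0. split; [lra|]. intros; lia.
  - destruct k as [|k'].
    + exists (exp 1). split; [left; apply exp_pos|]. intros i s Hi Hs.
      assert (i = 1%nat) by lia. subst. rewrite (proj1 Hb) by lra.
      rewrite Rabs_right by (left; apply exp_pos). apply exp_mono_le; lra.
    + set (k := S k') in *.
      set (M2 := INR (S k) * exp (INR (S k) ^ 2) * (INR (S k) * (M * M))).
      exists (Rmax M M2). split; [eapply Rle_trans; [apply HM|apply Rmax_l]|].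
      intros i s Hi Hs. destruct (Nat.eq_dec i (S k)).
      * subst i. eapply Rle_trans; [apply (int_bound b (S k) M Hb); auto; try (unfold k; lia)|].
        { intros; apply IH; auto; lia. }
        apply Rle_trans with M2; [|apply Rmax_r].
        unfold M2. assert (0 <= INR (S k) * exp (INR (S k) ^ 2) * (INR (S k) * (M * M))).
        { pose proof (pos_INR (S k)). pose proof (exp_pos (INR (S k) ^ 2)). 
          apply Rmult_le_pos; [nra|]. apply Rmult_le_pos; nra. }
        nra.
      * eapply Rle_trans; [apply IH; auto; lia| apply Rmax_l].
Qed.

Lemma b_lip0 b k : is_b b -> (2 <= k)%nat -> exists L, 0 <= L /\
  forall s, 0 <= s <= 1 -> Rabs (b k s) <= L * s.
Proof.
  intros Hb Hk. destruct (bound_unif b Hb k) as [M [HM H]].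
  exists (INR k * exp (INR k ^ 2) * (INR k * (M * M))). split.
  - pose proof (pos_INR k). pose proof (exp_pos (INR k ^ 2)).
    apply Rmult_le_pos; [nra|]. apply Rmult_le_pos; nra.
  - apply int_bound; auto. intros; apply H; auto; lia.
Qed.

Lemma bmax_cont0 b k : is_b b -> (1 <= k)%nat -> continuity_pt (fun s => b k (Rmax 0 s)) 0.
Proof.
  intros Hb Hk.
  assert (Hm : forall s, Rabs (s - 0) < 1 -> 0 <= Rmax 0 s <= 1 /\ Rmax 0 s <= Rabs (s - 0)).
  { intros s Hs. rewrite Rminus_0_r in *. unfold Rmax; destruct (Rle_dec 0 s);
    apply Rabs_def2 in Hs; rewrite ?Rabs_right, ?Rabs_left1 by lra; lra. }
  destruct (Nat.eq_dec k 1) as [->|Hk1].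
  - apply (continuity_pt_locally_ext (fun s => exp (Rmax 0 s)) _ 1); [lra| |].
    { intros y _. rewrite (proj1 Hb); auto. apply Rmax_l. }
    apply (continuity_pt_comp (fun s => Rmax 0 s) exp).
    + apply (lip_cont _ 0 1); [lra|]. intros s Hs.
      destruct (Hm s Hs) as [H1 H2]. rewrite (Rmax_left 0 0) by lra. rewrite Rminus_0_r.
      rewrite Rabs_right by lra. lra.
    + apply derivable_continuous_pt, derivable_pt_exp.
  - destruct (b_lip0 b k Hb ltac:(lia)) as [L [HL H]].
    apply (lip_cont _ 0 L HL). intros s Hs.
    destruct (Hm s Hs) as [H1 H2]. rewrite (Rmax_left 0 0) by lra.
    assert (Hb0 : b k 0 = 0).
    { pose proof (H 0 ltac:(lra)). rewrite Rmult_0_r in H0. revert H0; unfold Rabs; destruct (Rcase_abs (b k 0)); intros; lra. }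
    rewrite Hb0, Rminus_0_r. eapply Rle_trans; [apply H; auto|]. apply Rmult_le_compat_l; auto.
Qed.

Lemma dexp_lin' a c : derivable_pt_lim (fun s => exp (a * s)) c (a * exp (a * c)).
Proof.
  replace (a * exp (a * c)) with (exp (a * c) * (a * 1)) by ring.
  apply (derivable_pt_lim_comp (fun s => a * s) exp).
  - apply (derivable_pt_lim_scal (fun s => s)). apply derivable_pt_lim_id.
  - apply derivable_pt_lim_exp.
Qed.

Lemma Sb_cont b k u :
  (forall i, (1 <= i < k)%nat -> continuity_pt (b i) u) ->
  continuity_pt (Sb b k) u.
Proof.
  intros H. unfold Sb.
  apply (sumR_cont (fun s i => if Nat.leb 1 i then b i s * b (k - i)%nat s else 0)).
  intros i Hi. destruct (Nat.leb 1 i) eqn:E.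
  - apply Nat.leb_le in E. apply (continuity_pt_mult (b i) (b (k - i)%nat)); apply H; lia.
  - apply continuity_pt_const. intros ? ?; reflexivity.
Qed.

Lemma b_deriv_ind b : is_b b -> forall n k, (1 <= k <= n)%nat -> forall t, 0 < t ->
  derivable_pt_lim (b k) t (INR k ^ 2 * b k t + INR k * Sb b k t).
Proof.
  intros Hb n. induction n as [|n IH]; intros k Hk t Ht; [lia|].
  destruct (Nat.eq_dec k 1) as [->|Hk1].
  - assert (HS : Sb b 1 t = 0) by (unfold Sb; simpl; lra).
    rewrite HS, (proj1 Hb t) by lra.
    apply (derivable_pt_lim_locally_ext exp _ t 0 (t + 1)); [lra| |].
    + intros z Hz. rewrite (proj1 Hb z); lra.
    + replace (INR 1 ^ 2 * exp t + INR 1 * 0) with (exp t) by (simpl; ring).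
      apply derivable_pt_lim_exp.
  - destruct (Nat.eq_dec k (S n)) as [Hkn|Hkn]; [|apply IH; [lia|auto]].
    assert (Hk2 : (2 <= k)%nat) by lia.
    set (g := b_integrand b k).
    assert (Hcb : forall i u, (1 <= i < k)%nat -> 0 < u -> continuity_pt (b i) u).
    { intros i u Hi Hu. apply derivable_continuous_pt.
      exists (INR i ^ 2 * b i u + INR i * Sb b i u). apply IH; auto; lia. }
    assert (Hcg : forall u, 0 < u -> continuity_pt g u).
    { intros u Hu. unfold g, b_integrand.
      apply (continuity_pt_mult (fun s => exp (- (INR k ^ 2) * s)) (Sb b k)).
      - apply derivable_continuous_pt. exists (- (INR k ^ 2) * exp (- (INR k ^ 2) * u)).
        apply dexp_lin'.
      - apply Sb_cont. intros; apply Hcb; auto. }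
    set (a := t / 2). set (B := t + 1).
    assert (h : a <= B) by (unfold a, B; lra).
    assert (C0 : forall x, a <= x <= B -> continuity_pt g x).
    { intros x Hx. apply Hcg. unfold a in Hx; lra. }
    assert (Ha0 : 0 <= a) by (unfold a; lra).
    destruct ((proj2 Hb) k a Hk2 Ha0) as [pra _].
    set (I0 := RiemannInt pra).
    set (P := primitive h (FTC_P1 h C0)).
    assert (Hloc : forall z, a < z < B -> b k z = INR k * exp (INR k ^ 2 * z) * (I0 + P z)).
    { intros z Hz. assert (Hz0 : 0 <= z) by (unfold a in Hz; lra).
      destruct ((proj2 Hb) k z Hk2 Hz0) as [prz Hprz].
      rewrite Hprz. f_equal. unfold P, primitive.
      destruct (Rle_dec a z) as [r|r]; [|lra]. destruct (Rle_dec z B) as [r0|r0]; [|lra].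
      unfold I0. symmetry. apply RiemannInt_P26. }
    assert (HtaB : a < t < B) by (unfold a, B; lra).
    assert (HP : derivable_pt_lim P t (g t)) by (apply RiemannInt_P27; auto).
    assert (Hbt : b k t = INR k * exp (INR k ^ 2 * t) * (I0 + P t)) by (apply Hloc; auto).
    apply (derivable_pt_lim_locally_ext (fun z => INR k * (exp (INR k ^ 2 * z) * (I0 + P z))) _ t a B);
      [auto| intros; rewrite Hloc; auto; ring|].
    assert (Hg : g t = exp (- (INR k ^ 2) * t) * Sb b k t) by reflexivity.
    assert (He : exp (INR k ^ 2 * t) * exp (- (INR k ^ 2) * t) = 1).
    { rewrite <- exp_plus. replace (INR k ^ 2 * t + - (INR k ^ 2) * t) with 0 by ring. apply exp_0. }
    replace (INR k ^ 2 * b k t + INR k * Sb b k t) with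
      (INR k * ((INR k ^ 2 * exp (INR k ^ 2 * t)) * (I0 + P t) + exp (INR k ^ 2 * t) * g t)).
    2:{ rewrite Hbt, Hg. transitivity (INR k ^ 2 * (INR k * exp (INR k ^ 2 * t) * (I0 + P t)) +
          INR k * Sb b k t * (exp (INR k ^ 2 * t) * exp (- (INR k ^ 2) * t))); [ring|]. rewrite He. ring. }
    apply (derivable_pt_lim_scal (fun z => exp (INR k ^ 2 * z) * (I0 + P z))).
    apply (derivable_pt_lim_mult (fun z => exp (INR k ^ 2 * z)) (fun z => I0 + P z)).
    + apply dexp_lin'.
    + replace (g t) with (0 + g t) by ring.
      apply (derivable_pt_lim_plus (fun _ => I0) P); [apply derivable_pt_lim_const|auto].
Qed.

Lemma b_deriv b : is_b b -> forall k, (1 <= k)%nat -> forall t, 0 < t ->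
  derivable_pt_lim (b k) t (INR k ^ 2 * b k t + INR k * Sb b k t).
Proof. intros Hb k Hk. apply (b_deriv_ind b Hb k k); lia. Qed.


Lemma length_modify f k l : length (modify f k l) = length l.
Proof. revert k; induction l; intros [|k]; simpl; auto. Qed.

Lemma nth_modify f k l m : (k < length l)%nat ->
  nth m (modify f k l) 0%nat = if Nat.eq_dec m k then f (nth m l 0%nat) else nth m l 0%nat.
Proof.
  revert k m; induction l as [|a l IH]; intros k m Hk; simpl in Hk; [lia|].
  destruct k as [|k], m as [|m]; simpl; auto.
  - rewrite IH by lia. destruct (Nat.eq_dec m k), (Nat.eq_dec (S m) (S k)); auto; lia.
Qed.

Lemma nk_nth l k0 : nk l (S k0) = nth k0 l 0%nat.
Proof. unfold nk. f_equal. lia. Qed.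

Definition split_st (eta : list nat) (i j : nat) : list nat :=
  modify S (i - 1) (modify S (j - 1) (modify pred (i + j - 1) eta)).

Lemma length_merge l i j : length (merge l i j) = length l.
Proof. unfold merge. rewrite !length_modify. auto. Qed.
Lemma length_split l i j : length (split_st l i j) = length l.
Proof. unfold split_st. rewrite !length_modify. auto. Qed.

Lemma nth_merge l i j p : (1 <= i)%nat -> (1 <= j)%nat -> (i + j <= length l)%nat ->
  nth p (merge l i j) 0%nat =
  (if Nat.eq_dec p (i + j - 1) then S else fun x => x)
   ((if Nat.eq_dec p (j - 1) then pred else fun x => x)
    ((if Nat.eq_dec p (i - 1) then pred else fun x => x) (nth p l 0%nat))).
Proof.
  intros Hi Hj Hl. unfold merge.
  rewrite nth_modify by (rewrite !length_modify; lia).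
  rewrite nth_modify by (rewrite !length_modify; lia).
  rewrite nth_modify by lia.
  destruct (Nat.eq_dec p (i + j - 1)), (Nat.eq_dec p (j - 1)), (Nat.eq_dec p (i - 1)); reflexivity.
Qed.

Lemma nth_splitst l i j p : (1 <= i)%nat -> (1 <= j)%nat -> (i + j <= length l)%nat ->
  nth p (split_st l i j) 0%nat =
  (if Nat.eq_dec p (i - 1) then S else fun x => x)
   ((if Nat.eq_dec p (j - 1) then S else fun x => x)
    ((if Nat.eq_dec p (i + j - 1) then pred else fun x => x) (nth p l 0%nat))).
Proof.
  intros Hi Hj Hl. unfold split_st.
  rewrite nth_modify by (rewrite !length_modify; lia).
  rewrite nth_modify by (rewrite !length_modify; lia).
  rewrite nth_modify by lia.
  destruct (Nat.eq_dec p (i + j - 1)), (Nat.eq_dec p (j - 1)), (Nat.eq_dec p (i - 1)); reflexivity.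
Qed.

Lemma merge_split l i j : (1 <= i)%nat -> (1 <= j)%nat -> (i + j <= length l)%nat ->
  (1 <= nth (i + j - 1) l 0)%nat -> merge (split_st l i j) i j = l.
Proof.
  intros Hi Hj Hl Hm. apply nth_ext with 0%nat 0%nat; [rewrite length_merge, length_split; auto|].
  intros p Hp. rewrite nth_merge by (rewrite ?length_split; lia).
  rewrite nth_splitst by lia.
  destruct (Nat.eq_dec p (i + j - 1)), (Nat.eq_dec p (j - 1)), (Nat.eq_dec p (i - 1)); try lia;
  subst; simpl; lia.
Qed.

Lemma rate_nz_cond xi i j : rate psi_mult xi i j <> 0 ->
  if Nat.eq_dec i j then (2 <= nk xi i)%nat else (1 <= nk xi i /\ 1 <= nk xi j)%nat.
Proof.
  unfold rate. destruct (Nat.eq_dec i j) as [e|e]; intros H.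
  - destruct (nk xi i) as [|[|n]]; [simpl in H; lra| simpl in H; lra| lia].
  - destruct (nk xi i) as [|n1]; [simpl in H; lra|].
    destruct (nk xi j) as [|n2]; [simpl in H; lra|]. lia.
Qed.

Lemma split_merge xi i j : (1 <= i)%nat -> (1 <= j)%nat -> (i + j <= length xi)%nat ->
  rate psi_mult xi i j <> 0 -> split_st (merge xi i j) i j = xi.
Proof.
  intros Hi Hj Hl Hr. apply rate_nz_cond in Hr. unfold nk in Hr.
  apply nth_ext with 0%nat 0%nat; [rewrite length_split, length_merge; auto|].
  intros p Hp. rewrite nth_splitst by (rewrite ?length_merge; lia).
  rewrite nth_merge by lia.
  destruct (Nat.eq_dec i j) as [e|e].
  - subst j. destruct (Nat.eq_dec p (i + i - 1)), (Nat.eq_dec p (i - 1)); try lia; subst; simpl; lia.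
  - destruct (Nat.eq_dec p (i + j - 1)), (Nat.eq_dec p (j - 1)), (Nat.eq_dec p (i - 1)); try lia;
    subst; simpl; lia.
Qed.

Lemma merge_nz xi i j : (1 <= i)%nat -> (1 <= j)%nat -> (i + j <= length xi)%nat ->
  (1 <= nth (i + j - 1) (merge xi i j) 0)%nat.
Proof.
  intros Hi Hj Hl. rewrite nth_merge by lia.
  destruct (Nat.eq_dec (i + j - 1) (i + j - 1)); [lia|congruence].
Qed.

Lemma fold_add_acc (l : list nat) a : fold_right Nat.add a l = (a + fold_right Nat.add 0 l)%nat.
Proof. induction l; simpl; lia. Qed.

Lemma weight_sumR_gen (l : list nat) n :
  INR (fold_right Nat.add 0%nat (map (fun k => k * nk l k)%nat (seq 1 n))) =
  sumR (fun p => INR (S p) * INR (nth p l 0%nat)) n.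
Proof.
  induction n; [simpl; auto|].
  rewrite seq_S, map_app, fold_right_app.
  change (fold_right Nat.add 0%nat (map (fun k => (k * nk l k)%nat) [(1 + n)%nat])) with
    ((1 + n) * nk l (1 + n) + 0)%nat.
  rewrite fold_add_acc, plus_INR, IHn, sumR_S.
  rewrite Nat.add_0_r, mult_INR. replace (1 + n)%nat with (S n) by lia. rewrite nk_nth. lra.
Qed.

Lemma weight_sumR l : INR (weight l) = sumR (fun p => INR (S p) * INR (nth p l 0%nat)) (length l).
Proof. apply weight_sumR_gen. Qed.

Lemma sumR_nonneg f n : (forall i, (i < n)%nat -> 0 <= f i) -> 0 <= sumR f n.
Proof. induction n; intros H; simpl; [lra|]. pose proof (H n ltac:(lia)). assert (0 <= sumR f n) by (apply IHn; intros; apply H; lia). lra. Qed.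

Lemma sumR_ge_one f n a : (forall i, (i < n)%nat -> 0 <= f i) -> (a < n)%nat -> f a <= sumR f n.
Proof.
  induction n; intros H Ha; [lia|]. rewrite sumR_S.
  assert (0 <= sumR f n) by (apply sumR_nonneg; intros; apply H; lia).
  destruct (Nat.eq_dec a n); [subst; lra|].
  assert (f a <= sumR f n) by (apply IHn; [intros; apply H; lia | lia]).
  pose proof (H n ltac:(lia)). lra.
Qed.


Lemma sumR_ge_two f n a c : (forall i, (i < n)%nat -> 0 <= f i) -> (a < n)%nat -> (c < n)%nat -> a <> c ->
  f a + f c <= sumR f n.
Proof.
  induction n; intros H Ha Hc Hac; [lia|]. rewrite sumR_S.
  destruct (Nat.eq_dec a n).
  - subst. pose proof (sumR_ge_one f n c ltac:(intros; apply H; lia) ltac:(lia)). lra.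
  - destruct (Nat.eq_dec c n).
    + subst. pose proof (sumR_ge_one f n a ltac:(intros; apply H; lia) ltac:(lia)). lra.
    + pose proof (IHn ltac:(intros; apply H; lia) ltac:(lia) ltac:(lia) Hac). pose proof (H n ltac:(lia)). lra.
Qed.

Lemma in_all_lists n m l : In l (all_lists n m) <-> length l = n /\ Forall (fun x => (x <= m)%nat) l.
Proof.
  revert l; induction n; intros l.
  - simpl. split.
    + intros [<-|[]]; auto.
    + intros [H _]; destruct l; [auto|simpl in H; lia].
  - change (all_lists (S n) m) with (flat_map (fun x => map (cons x) (all_lists n m)) (seq 0 (S m))).
    rewrite in_flat_map. split.
    + intros [x [Hx Hl]]. apply in_map_iff in Hl. destruct Hl as [l' [<- Hl']].
      apply IHn in Hl'. destruct Hl'. apply in_seq in Hx. simpl. split; [lia|]. constructor; [lia|auto].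
    + intros [Hl Hf]. destruct l as [|x l']; [simpl in Hl; lia|].
      inversion Hf; subst. exists x. split; [apply in_seq; lia|].
      apply in_map. apply IHn. simpl in Hl. split; auto.
Qed.

Lemma NoDup_all_lists n m : NoDup (all_lists n m).
Proof.
  induction n; [simpl; constructor; [simpl; auto|constructor]|].
  change (all_lists (S n) m) with (flat_map (fun x => map (cons x) (all_lists n m)) (seq 0 (S m))).
  assert (Hs : NoDup (seq 0 (S m))) by apply seq_NoDup.
  generalize dependent (seq 0 (S m)). intros s Hs. induction s as [|a s IHs]; simpl; [constructor|].
  inversion Hs; subst. apply NoDup_app.
  - apply NoDup_map_NoDup_ForallPairs; auto. intros x y _ _ H; injection H; auto.
  - apply IHs; auto.
  - intros x Hx Hx'. apply in_map_iff in Hx. destruct Hx as [l1 [<- _]].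
    apply in_flat_map in Hx'. destruct Hx' as [y [Hy Hy']]. apply in_map_iff in Hy'.
    destruct Hy' as [l2 [E _]]. injection E; intros; subst; auto.
Qed.

Lemma NoDup_Omega N : NoDup (Omega N).
Proof. apply NoDup_filter, NoDup_all_lists. Qed.

Lemma in_Omega_iff N eta : In eta (Omega N) <-> in_Omega N eta.
Proof.
  unfold Omega, in_Omega. rewrite filter_In, in_all_lists, Nat.eqb_eq. split.
  - intros [[H1 _] H2]; auto.
  - intros [H1 H2]. split; [split; auto|auto].
    apply Forall_forall. intros x Hx. apply In_nth with (d := 0%nat) in Hx. destruct Hx as [p [Hp <-]].
    pose proof (weight_sumR eta) as W. rewrite H2 in W.
    pose proof (sumR_ge_one (fun p => INR (S p) * INR (nth p eta 0%nat)) (length eta) p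
       ltac:(intros; apply Rmult_le_pos; apply pos_INR) Hp) as G. cbv beta in G.
    rewrite <- W in G. apply INR_le. rewrite S_INR in G. pose proof (pos_INR p).
    pose proof (pos_INR (nth p eta 0%nat)). nra.
Qed.

Lemma split_in_Omega N eta i j : In eta (Omega N) -> (1 <= i)%nat -> (1 <= j)%nat -> (i + j <= N)%nat ->
  (1 <= nth (i + j - 1) eta 0)%nat -> In (split_st eta i j) (Omega N).
Proof.
  intros H Hi Hj HN Hm. apply in_Omega_iff in H. destruct H as [H1 H2].
  apply in_Omega_iff. split; [rewrite length_split; auto|].
  apply INR_eq. transitivity (INR (weight eta)); [|rewrite H2; auto].
  rewrite !weight_sumR, length_split, H1.
  rewrite (sumR_ext _ (fun p => ((INR (S p) * INR (nth p eta 0%nat) +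
     (if Nat.eq_dec p (i - 1) then INR (S p) else 0)) + (if Nat.eq_dec p (j - 1) then INR (S p) else 0))
      + (-1) * (if Nat.eq_dec p (i + j - 1) then INR (S p) else 0))).
  - rewrite !sumR_plus, sumR_scal.
    rewrite (sumR_single (fun p => INR (S p))) by lia.
    rewrite (sumR_single (fun p => INR (S p))) by lia.
    rewrite (sumR_single (fun p => INR (S p))) by lia.
    replace (S (i - 1)) with i by lia. replace (S (j - 1)) with j by lia.
    replace (S (i + j - 1)) with (i + j)%nat by lia. rewrite plus_INR. lra.
  - intros p Hp. rewrite nth_splitst by lia.
    destruct (Nat.eq_dec p (i + j - 1)), (Nat.eq_dec p (j - 1)), (Nat.eq_dec p (i - 1)); try lia;
    subst; rewrite ?S_INR, ?mult_INR; simpl;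
    try (rewrite ?S_INR, ?(Nat.succ_pred_pos _ Hm); ring);
    try (rewrite <- (Nat.succ_pred_pos (nth _ eta 0%nat)) at 2 by lia; rewrite S_INR; ring);
    try ring.
Qed.


Definition exc (f : nat -> R) (P : nat -> bool) (n : nat) : R :=
  prodR (fun k => if P k then 1 else f k) n.

Lemma exc_split f P n a : (a < n)%nat -> P a = false ->
  exc f P n = f a * exc f (fun k => P k || Nat.eqb k a) n.
Proof.
  intros Ha HP. unfold exc. rewrite (prodR_split _ n a Ha). rewrite HP. f_equal.
  apply prodR_ext. intros k Hk. destruct (Nat.eq_dec k a).
  - subst. rewrite Nat.eqb_refl, orb_true_r. auto.
  - apply Nat.eqb_neq in n0. rewrite n0, orb_false_r. auto.
Qed.

Lemma exc_ext f g P Q n : (forall k, (k < n)%nat -> P k = Q k) ->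
  (forall k, (k < n)%nat -> P k = false -> f k = g k) -> exc f P n = exc g Q n.
Proof.
  intros H1 H2. unfold exc. apply prodR_ext. intros k Hk. rewrite <- H1 by auto.
  destruct (P k) eqn:E; auto.
Qed.

Lemma prodR_exc f n : prodR f n = exc f (fun _ => false) n.
Proof. reflexivity. Qed.

Lemma prodR_upd f n a v : (a < n)%nat ->
  prodR (fun k => if Nat.eq_dec k a then v else f k) n = v * exc f (fun k => Nat.eqb k a) n.
Proof.
  intros Ha. rewrite (prodR_split _ n a Ha). destruct (Nat.eq_dec a a); [|lia]. f_equal.
  unfold exc. apply prodR_ext. intros k Hk. destruct (Nat.eq_dec k a).
  - subst; rewrite Nat.eqb_refl; auto.
  - apply Nat.eqb_neq in n0; rewrite n0. reflexivity.
Qed.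

Definition cpair (i j : nat) : R := if Nat.eq_dec i j then 1 else 2.

Lemma sym_sum (h : nat -> nat -> R) M : (forall i j, h i j = h j i) ->
  sumR (fun i => sumR (fun j => h i j) M) M =
  sumR (fun i => sumR (fun j => if Nat.leb i j then cpair i j * h i j else 0) M) M.
Proof.
  intros Hs. induction M; [reflexivity|].
  assert (L : sumR (fun i => sumR (fun j => h i j) (S M)) (S M) =
     sumR (fun i => sumR (fun j => h i j) M) M + sumR (fun i => h i M) M + (sumR (fun j => h M j) M + h M M)).
  { rewrite sumR_S. rewrite (sumR_ext _ (fun i => sumR (fun j => h i j) M + h i M)) by (intros; reflexivity).
    rewrite sumR_plus. rewrite sumR_S. ring. }
  set (r := fun i j => if Nat.leb i j then cpair i j * h i j else 0).
  assert (R : sumR (fun i => sumR (fun j => r i j) (S M)) (S M) =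
     sumR (fun i => sumR (fun j => r i j) M) M + sumR (fun i => r i M) M + (sumR (fun j => r M j) M + r M M)).
  { rewrite sumR_S. rewrite (sumR_ext _ (fun i => sumR (fun j => r i j) M + r i M)) by (intros; reflexivity).
    rewrite sumR_plus. rewrite sumR_S. ring. }
  change (sumR (fun i => sumR (fun j => h i j) (S M)) (S M) = sumR (fun i => sumR (fun j => r i j) (S M)) (S M)).
  rewrite L, R, IHM. fold r.
  rewrite (sumR_ext (fun i => r i M) (fun i => 2 * h i M)).
  2:{ intros i Hi. unfold r, cpair. assert (Nat.leb i M = true) by (apply Nat.leb_le; lia).
      rewrite H. destruct (Nat.eq_dec i M); [lia|auto]. }
  rewrite (sumR_zero (fun j => r M j)).
  2:{ intros j Hj. unfold r. assert (Nat.leb M j = false) by (apply Nat.leb_gt; lia). rewrite H; auto. }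
  rewrite sumR_scal. rewrite (sumR_ext (fun j => h M j) (fun j => h j M)) by (intros; apply Hs).
  unfold r, cpair. rewrite Nat.leb_refl. destruct (Nat.eq_dec M M); [|lia]. ring.
Qed.

Lemma diag_sum (G : nat -> nat -> R) M :
  sumR (fun i => sumR (fun j => if Nat.ltb (i + j) M then G i j else 0) M) M =
  sumR (fun m => sumR (fun i => G i (m - i)%nat) (S m)) M.
Proof.
  induction M; [reflexivity|].
  rewrite (sumR_S (fun m => sumR (fun i => G i (m - i)%nat) (S m))), <- IHM.
  rewrite (sumR_ext (fun i => sumR (fun j => if Nat.ltb (i + j) (S M) then G i j else 0) (S M))
     (fun i => sumR (fun j => if Nat.ltb (i + j) M then G i j else 0) (S M) +
               sumR (fun j => if Nat.eq_dec j (M - i) then G i j else 0) (S M))).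
  - rewrite sumR_plus. f_equal.
    + rewrite sumR_S. rewrite (sumR_ext (fun i => sumR (fun j => if Nat.ltb (i + j) M then G i j else 0) (S M))
         (fun i => sumR (fun j => if Nat.ltb (i + j) M then G i j else 0) M)).
      * rewrite (sumR_zero (fun j => if Nat.ltb (M + j) M then G M j else 0)); [ring|].
        intros j Hj. assert (Nat.ltb (M + j) M = false) by (apply Nat.ltb_ge; lia). rewrite H; auto.
      * intros i Hi. rewrite sumR_S. assert (Nat.ltb (i + M) M = false) by (apply Nat.ltb_ge; lia).
        rewrite H; ring.
    + apply sumR_ext. intros i Hi. rewrite sumR_single by lia. auto.
  - intros i Hi. rewrite <- sumR_plus. apply sumR_ext. intros j Hj.
    destruct (Nat.ltb (i + j) (S M)) eqn:E1, (Nat.ltb (i + j) M) eqn:E2, (Nat.eq_dec j (M - i));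
      apply Nat.ltb_lt in E1 || apply Nat.ltb_ge in E1;
      apply Nat.ltb_lt in E2 || apply Nat.ltb_ge in E2; try lia; try ring.
Qed.

Lemma sumR_shift f n : sumR f (S n) = f 0%nat + sumR (fun k => f (S k)) n.
Proof. induction n; simpl in *; [ring|]. rewrite IHn. ring. Qed.

Lemma sum_list_ind0 l e f : ~ In e l -> sum_list l (fun x => ind_eq x e * f x) = 0.
Proof.
  induction l as [|a l IH]; intros He; [reflexivity|].
  rewrite sum_list_cons. unfold ind_eq at 1. destruct (list_eq_dec Nat.eq_dec a e).
  - subst. exfalso; apply He; simpl; auto.
  - rewrite IH; [ring|]. intros H; apply He; simpl; auto.
Qed.

Lemma sum_list_ind l e f : NoDup l -> In e l -> sum_list l (fun x => ind_eq x e * f x) = f e.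
Proof.
  induction l as [|a l IH]; intros Hn He; [destruct He|].
  inversion Hn; subst. rewrite sum_list_cons.
  unfold ind_eq at 1. destruct (list_eq_dec Nat.eq_dec a e).
  - subst. rewrite sum_list_ind0; auto. ring.
  - destruct He as [He|He]; [congruence|]. rewrite IH; auto. ring.
Qed.


Definition Gf (b : nat -> R -> R) (t : R) (k n : nat) : R :=
  b k t ^ n / (INR k ^ n * INR (fact n)).

Lemma INR_fact_nz n : INR (fact n) <> 0.
Proof. apply INR_fact_neq_0. Qed.

Lemma Gf_S b t k n : (1 <= k)%nat ->
  Gf b t k (S n) * (INR (S n) * INR k) = Gf b t k n * b k t.
Proof.
  intros Hk. unfold Gf. rewrite fact_simpl, mult_INR. simpl pow.
  assert (INR k <> 0) by (apply not_0_INR; lia).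
  assert (INR k ^ n <> 0) by (apply pow_nonzero; auto).
  pose proof (INR_fact_nz n). assert (INR (S n) <> 0) by (apply not_0_INR; lia).
  field. auto.
Qed.

Lemma Gf_Y b t m z : (1 <= m)%nat ->
  INR (S z) * b m t ^ pred (S z) * INR m / (INR m ^ S z * INR (fact (S z))) = Gf b t m z.
Proof.
  intros Hm. unfold Gf. rewrite fact_simpl, mult_INR. simpl pow. simpl pred.
  assert (INR m <> 0) by (apply not_0_INR; lia).
  assert (INR m ^ z <> 0) by (apply pow_nonzero; auto).
  pose proof (INR_fact_nz z). assert (INR (S z) <> 0) by (apply not_0_INR; lia).
  field. auto.
Qed.

Lemma wt_sum N eta : In eta (Omega N) ->
  sumR (fun i => INR i * INR (nk eta i)) (S N) = INR N.
Proof.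
  intros H. apply in_Omega_iff in H. destruct H as [H1 H2].
  rewrite sumR_shift. simpl (INR 0). rewrite Rmult_0_l, Rplus_0_l.
  rewrite <- H2 at 2. rewrite weight_sumR, H1. apply sumR_ext. intros; rewrite nk_nth; auto.
Qed.

Lemma wt_one N eta i : In eta (Omega N) -> (1 <= i <= N)%nat -> INR i * INR (nk eta i) <= INR N.
Proof.
  intros H Hi. apply in_Omega_iff in H. destruct H as [H1 H2].
  rewrite <- H2, weight_sumR, H1.
  pose proof (sumR_ge_one (fun p => INR (S p) * INR (nth p eta 0%nat)) N (i - 1)
      ltac:(intros; apply Rmult_le_pos; apply pos_INR) ltac:(lia)) as G. cbv beta in G.
  replace (S (i - 1)) with i in G by lia. unfold nk. auto.
Qed.

Lemma wt_two N eta i j : In eta (Omega N) -> (1 <= i <= N)%nat -> (1 <= j <= N)%nat -> i <> j ->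
  INR i * INR (nk eta i) + INR j * INR (nk eta j) <= INR N.
Proof.
  intros H Hi Hj Hij. apply in_Omega_iff in H. destruct H as [H1 H2].
  rewrite <- H2, weight_sumR, H1.
  pose proof (sumR_ge_two (fun p => INR (S p) * INR (nth p eta 0%nat)) N (i - 1) (j - 1)
      ltac:(intros; apply Rmult_le_pos; apply pos_INR) ltac:(lia) ltac:(lia) ltac:(lia)) as G. cbv beta in G.
  replace (S (i - 1)) with i in G by lia. replace (S (j - 1)) with j in G by lia. unfold nk. auto.
Qed.

Lemma lambda_eq N eta : In eta (Omega N) ->
  sum_pairs N (fun i j => rate psi_mult eta i j) = INR N ^ 2 - sumR (fun i => INR i ^ 2 * INR (nk eta i)) (S N).
Proof.
  intros HO.
  set (H := fun i j => INR i * INR (nk eta i) * (INR j * INR (nk eta j))).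
  assert (Ha : sumR (fun i => sumR (fun j => H i j) (S N)) (S N) = INR N ^ 2).
  { unfold H. rewrite (sumR_ext _ (fun i => INR i * INR (nk eta i) * sumR (fun j => INR j * INR (nk eta j)) (S N)))
      by (intros; apply sumR_scal).
    rewrite sumR_scal_r, wt_sum; auto. ring. }
  rewrite sym_sum in Ha by (intros; unfold H; ring).
  rewrite (sumR_ext _ (fun i => sumR (fun j => (if pair_ok N i j then rate psi_mult eta i j else 0)
        + (if Nat.eq_dec j i then INR i ^ 2 * INR (nk eta i) else 0)) (S N))) in Ha.
  - rewrite (sumR_ext _ (fun i => sumR (fun j => if pair_ok N i j then rate psi_mult eta i j else 0) (S N)
        + INR i ^ 2 * INR (nk eta i))) in Ha.
    + rewrite sumR_plus in Ha. unfold sum_pairs. lra.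
    + intros i Hi. rewrite sumR_plus. rewrite (sumR_single (fun _ => INR i ^ 2 * INR (nk eta i))) by lia. auto.
  - intros i Hi. apply sumR_ext. intros j Hj. unfold H, pair_ok, cpair, rate, psi_mult.
    destruct (Nat.leb i j) eqn:E1; [apply Nat.leb_le in E1|apply Nat.leb_gt in E1].
    + destruct (Nat.eq_dec i j) as [e|e].
      * subst j. destruct (Nat.eq_dec i i); [|lia].
        destruct (Nat.leb 1 i) eqn:E2; [apply Nat.leb_le in E2|apply Nat.leb_gt in E2; assert (i = 0%nat) by lia; subst; simpl; ring].
        rewrite ?Nat.leb_refl. simpl andb.
        destruct (Nat.leb (i + i) N) eqn:E3; [field|apply Nat.leb_gt in E3].
        pose proof (wt_one N eta i HO ltac:(lia)) as W1.
        destruct (nk eta i) as [|[|n]]; [simpl; ring|simpl; ring|].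
        exfalso. rewrite !S_INR in W1. pose proof (pos_INR n).
        assert (W2 : INR N < INR (i + i)) by (apply lt_INR; lia). rewrite plus_INR in W2.
        assert (1 <= INR i) by (apply (le_INR 1); lia). nra.
      * destruct (Nat.eq_dec j i); [lia|].
        destruct (Nat.leb 1 i) eqn:E2; [apply Nat.leb_le in E2|apply Nat.leb_gt in E2; assert (i = 0%nat) by lia; subst; simpl; ring].
        assert (W0 : Nat.leb i j = true) by (apply Nat.leb_le; lia). simpl andb.
        destruct (Nat.leb (i + j) N) eqn:E3; [ring|apply Nat.leb_gt in E3].
        pose proof (wt_two N eta i j HO ltac:(lia) ltac:(lia) e) as W1.
        assert (W2 : INR N < INR (i + j)) by (apply lt_INR; lia). rewrite plus_INR in W2.
        destruct (nk eta i) as [|ni]; [simpl; ring|]. destruct (nk eta j) as [|nj]; [simpl; ring|].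
        exfalso. rewrite !S_INR in W1. pose proof (pos_INR ni). pose proof (pos_INR nj).
        pose proof (pos_INR i). pose proof (pos_INR j). nra.
    + destruct (Nat.eq_dec j i); [lia|].
      rewrite andb_false_r. simpl. ring.
Qed.

Definition Fq (b : nat -> R -> R) (t : R) (eta : list nat) (k0 : nat) : R :=
  Gf b t (S k0) (nk eta (S k0)).
Definition qf (b : nat -> R -> R) (N : nat) (t : R) (eta : list nat) : R :=
  INR (fact N) * exp (- (INR N ^ 2) * t) * prodR (Fq b t eta) N.
Definition Yv (b : nat -> R -> R) (t : R) (eta : list nat) (i j : nat) : R :=
  INR (nk eta (i + j)) * b (i + j)%nat t ^ pred (nk eta (i + j)) * (INR (i + j) * (b i t * b j t)) /
  (INR (i + j) ^ nk eta (i + j) * INR (fact (nk eta (i + j)))).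
Definition Wt (b : nat -> R -> R) (N : nat) (t : R) (eta : list nat) (i j : nat) : R :=
  if (Nat.leb 1 i && Nat.leb 1 j && Nat.leb (i + j) N)%bool
  then prodR (fun k0 => if Nat.eq_dec k0 (i + j - 1) then Yv b t eta i j else Fq b t eta k0) N
  else 0.

Lemma pair_ok_iff N i j : pair_ok N i j = true <-> (1 <= i /\ i <= j /\ i + j <= N)%nat.
Proof.
  unfold pair_ok. rewrite !andb_true_iff, !Nat.leb_le. tauto.
Qed.

Lemma Fq_split b t s i j p : (1 <= i)%nat -> (1 <= j)%nat -> (i + j <= length s)%nat ->
  Fq b t (split_st s i j) p = Gf b t (S p)
   ((if Nat.eq_dec p (i - 1) then S else fun x => x)
    ((if Nat.eq_dec p (j - 1) then S else fun x => x)
     ((if Nat.eq_dec p (i + j - 1) then pred else fun x => x) (nth p s 0%nat)))).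
Proof. intros. unfold Fq. rewrite nk_nth, nth_splitst; auto. Qed.

Lemma Fq_eta b t s p : Fq b t s p = Gf b t (S p) (nth p s 0%nat).
Proof. unfold Fq. rewrite nk_nth. auto. Qed.

Lemma inflow_alg b N t eta i j : In eta (Omega N) -> pair_ok N i j = true ->
  (1 <= nk eta (i + j))%nat ->
  qf b N t (split_st eta i j) * rate psi_mult (split_st eta i j) i j =
  cpair i j * (INR (fact N) * exp (- (INR N ^ 2) * t) * Wt b N t eta i j).
Proof.
  intros HO Hp Hz. apply pair_ok_iff in Hp. destruct Hp as [Hi [Hij HN]].
  assert (HL : length eta = N) by (apply in_Omega_iff in HO; apply HO).
  unfold Wt. replace (Nat.leb 1 i && Nat.leb 1 j && Nat.leb (i + j) N)%bool with true
    by (symmetry; rewrite !andb_true_iff, !Nat.leb_le; lia).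
  rewrite prodR_upd by lia. unfold qf.
  set (C := INR (fact N) * exp (- (INR N ^ 2) * t)).
  set (s := split_st eta i j).
  set (pi := (i - 1)%nat). set (pj := (j - 1)%nat). set (pm := (i + j - 1)%nat).
  unfold nk in Hz. replace (i + j - 1)%nat with pm in Hz by auto.
  destruct (nth pm eta 0%nat) as [|z'] eqn:Ez; [lia|].
  assert (Hm : (1 <= i + j)%nat) by lia.
  assert (HY : Yv b t eta i j = Gf b t (i + j) z' * (b i t * b j t)).
  { unfold Yv, nk. replace (i + j - 1)%nat with pm by auto. rewrite Ez. rewrite <- (Gf_Y b t (i + j) z' Hm).
    unfold Rdiv; ring. }
  rewrite HY.
  assert (Hs : forall p, (p < N)%nat -> Fq b t s p = Gf b t (S p)
     ((if Nat.eq_dec p pi then S else fun x => x)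
      ((if Nat.eq_dec p pj then S else fun x => x)
       ((if Nat.eq_dec p pm then pred else fun x => x) (nth p eta 0%nat))))).
  { intros p Hp. unfold s. rewrite Fq_split by lia. reflexivity. }
  destruct (Nat.eq_dec i j) as [e|e].
  -
    subst j. unfold cpair. destruct (Nat.eq_dec i i); [|lia].
    assert (pj = pi) by (unfold pj, pi; auto). rewrite H in Hs.
    rewrite prodR_exc. rewrite (exc_split _ _ N pi) by (auto; unfold pi; lia).
    rewrite (exc_split _ _ N pm) by (try (unfold pm; lia); simpl; apply Nat.eqb_neq; unfold pm, pi; lia).
    rewrite (exc_split (Fq b t eta) _ N pi) by (try (unfold pi; lia); apply Nat.eqb_neq; unfold pm, pi; lia).
    rewrite (exc_ext (Fq b t s) (Fq b t eta) _ (fun k => Nat.eqb k pm || Nat.eqb k pi)).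
    2:{ intros k _. destruct (Nat.eqb k pi), (Nat.eqb k pm); reflexivity. }
    2:{ intros k Hk Hf. apply orb_false_iff in Hf. destruct Hf as [Hf Hf2]. apply orb_false_iff in Hf.
        destruct Hf as [_ Hf1]. apply Nat.eqb_neq in Hf1. apply Nat.eqb_neq in Hf2.
        rewrite Hs by auto. rewrite Fq_eta. destruct (Nat.eq_dec k pi); [lia|].
        destruct (Nat.eq_dec k pm); [lia|]. reflexivity. }
    rewrite (Hs pi) by (unfold pi; lia). rewrite (Hs pm) by (unfold pm; lia).
    destruct (Nat.eq_dec pi pi); [|lia]. destruct (Nat.eq_dec pi pm); [unfold pi, pm in *; lia|].
    destruct (Nat.eq_dec pm pi); [unfold pi, pm in *; lia|]. destruct (Nat.eq_dec pm pm); [|lia].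
    rewrite Ez. simpl pred. rewrite Fq_eta.
    replace (S pi) with i by (unfold pi; lia). replace (S pm) with (i + i)%nat by (unfold pm; lia).
    unfold rate. destruct (Nat.eq_dec i i); [|lia]. unfold nk.
    replace (i - 1)%nat with pi by auto. unfold s. rewrite nth_splitst by lia. fold pi pm.
    destruct (Nat.eq_dec pi pi); [|lia]. destruct (Nat.eq_dec pi pm); [unfold pi, pm in *; lia|].
    set (x := nth pi eta 0%nat). unfold psi_mult.
    set (E := exc (Fq b t eta) _ N).
    assert (G1 := Gf_S b t i (S x) Hi). assert (G2 := Gf_S b t i x Hi).
    replace (INR (S (S x)) * (INR (S (S x)) - 1) / 2 * (2 * INR i * INR i)) with
      ((INR (S (S x)) * INR i) * (INR (S x) * INR i)) by (rewrite (S_INR (S x)); field).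
    transitivity (C * E * Gf b t (i + i) z' * ((Gf b t i (S (S x)) * (INR (S (S x)) * INR i)) * (INR (S x) * INR i)));
      [ring|]. rewrite G1.
    transitivity (C * E * Gf b t (i + i) z' * ((Gf b t i (S x) * (INR (S x) * INR i)) * b i t)); [ring|].
    rewrite G2. ring.
  -
    unfold cpair. destruct (Nat.eq_dec i j); [lia|].
    rewrite prodR_exc. rewrite (exc_split _ _ N pi) by (auto; unfold pi; lia).
    rewrite (exc_split _ _ N pj) by (try (unfold pj; lia); simpl; apply Nat.eqb_neq; unfold pj, pi; lia).
    rewrite (exc_split _ _ N pm) by (try (unfold pm; lia); simpl; apply orb_false_iff; split; apply Nat.eqb_neq; unfold pm, pj, pi; lia).
    rewrite (exc_split (Fq b t eta) _ N pi) by (try (unfold pi; lia); apply Nat.eqb_neq; unfold pm, pi; lia).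
    rewrite (exc_split (Fq b t eta) _ N pj) by (try (unfold pj; lia); apply orb_false_iff; split; apply Nat.eqb_neq; unfold pm, pj, pi; lia).
    rewrite (exc_ext (Fq b t s) (Fq b t eta) _ (fun k => Nat.eqb k pm || Nat.eqb k pi || Nat.eqb k pj)).
    2:{ intros k _. destruct (Nat.eqb k pi), (Nat.eqb k pm), (Nat.eqb k pj); reflexivity. }
    2:{ intros k Hk Hf. apply orb_false_iff in Hf. destruct Hf as [Hf Hf3]. apply orb_false_iff in Hf.
        destruct Hf as [Hf Hf2]. apply orb_false_iff in Hf. destruct Hf as [_ Hf1].
        apply Nat.eqb_neq in Hf1. apply Nat.eqb_neq in Hf2. apply Nat.eqb_neq in Hf3.
        rewrite Hs by auto. rewrite Fq_eta. destruct (Nat.eq_dec k pi); [lia|].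
        destruct (Nat.eq_dec k pj); [lia|]. destruct (Nat.eq_dec k pm); [lia|]. reflexivity. }
    rewrite (Hs pi) by (unfold pi; lia). rewrite (Hs pj) by (unfold pj; lia). rewrite (Hs pm) by (unfold pm; lia).
    destruct (Nat.eq_dec pi pi); [|lia]. destruct (Nat.eq_dec pi pj); [unfold pi, pj in *; lia|].
    destruct (Nat.eq_dec pi pm); [unfold pi, pm in *; lia|].
    destruct (Nat.eq_dec pj pi); [unfold pi, pj in *; lia|]. destruct (Nat.eq_dec pj pj); [|lia].
    destruct (Nat.eq_dec pj pm); [unfold pj, pm in *; lia|].
    destruct (Nat.eq_dec pm pi); [unfold pi, pm in *; lia|]. destruct (Nat.eq_dec pm pj); [unfold pj, pm in *; lia|].
    destruct (Nat.eq_dec pm pm); [|lia].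
    rewrite Ez. simpl pred. rewrite !Fq_eta.
    replace (S pi) with i by (unfold pi; lia). replace (S pj) with j by (unfold pj; lia).
    replace (S pm) with (i + j)%nat by (unfold pm; lia).
    unfold rate. destruct (Nat.eq_dec i j); [lia|]. unfold nk.
    replace (i - 1)%nat with pi by auto. replace (j - 1)%nat with pj by auto.
    unfold s. rewrite !nth_splitst by lia. fold pi pj pm.
    destruct (Nat.eq_dec pi pi); [|lia]. destruct (Nat.eq_dec pi pj); [unfold pi, pj in *; lia|].
    destruct (Nat.eq_dec pi pm); [unfold pi, pm in *; lia|].
    destruct (Nat.eq_dec pj pi); [unfold pi, pj in *; lia|]. destruct (Nat.eq_dec pj pj); [|lia].
    destruct (Nat.eq_dec pj pm); [unfold pj, pm in *; lia|].
    set (x := nth pi eta 0%nat). set (y := nth pj eta 0%nat). unfold psi_mult.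
    set (E := exc (Fq b t eta) _ N).
    assert (G1 := Gf_S b t i x Hi). assert (G2 := Gf_S b t j y ltac:(lia)).
    transitivity (C * E * Gf b t (i + j) z' * 2 * ((Gf b t i (S x) * (INR (S x) * INR i)) * (Gf b t j (S y) * (INR (S y) * INR j))));
      [ring|]. rewrite G1, G2. ring.
Qed.

Lemma inflow b N t eta i j : In eta (Omega N) -> pair_ok N i j = true ->
  sum_list (Omega N) (fun xi => qf b N t xi * (rate psi_mult xi i j * ind_eq (merge xi i j) eta)) =
  cpair i j * (INR (fact N) * exp (- (INR N ^ 2) * t) * Wt b N t eta i j).
Proof.
  intros HO Hp. pose proof Hp as Hp'. apply pair_ok_iff in Hp'. destruct Hp' as [Hi [Hij HN]].
  assert (HL : length eta = N) by (apply in_Omega_iff in HO; apply HO).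
  destruct (Nat.eq_dec (nk eta (i + j)) 0) as [Hz|Hz].
  - rewrite (sum_list_ext _ _ (fun _ => 0)).
    + rewrite sum_list_zero. unfold Wt.
      replace (Nat.leb 1 i && Nat.leb 1 j && Nat.leb (i + j) N)%bool with true
        by (symmetry; rewrite !andb_true_iff, !Nat.leb_le; lia).
      rewrite prodR_upd by lia. unfold Yv. rewrite Hz. simpl INR. unfold Rdiv. ring.
    + intros xi Hxi. assert (HLx : length xi = N) by (apply in_Omega_iff in Hxi; apply Hxi).
      destruct (Req_dec (rate psi_mult xi i j) 0) as [Hr|Hr]; [rewrite Hr; ring|].
      unfold ind_eq. destruct (list_eq_dec Nat.eq_dec (merge xi i j) eta) as [E|E]; [|ring].
      exfalso. pose proof (merge_nz xi i j ltac:(lia) ltac:(lia) ltac:(lia)). rewrite E in H.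
      unfold nk in Hz. lia.
  - set (s := split_st eta i j).
    assert (HsO : In s (Omega N)) by (apply split_in_Omega; auto; try lia; unfold nk in Hz; lia).
    rewrite (sum_list_ext _ _ (fun xi => ind_eq xi s * (qf b N t s * rate psi_mult s i j))).
    + rewrite sum_list_ind; auto using NoDup_Omega. apply inflow_alg; auto. lia.
    + intros xi Hxi. assert (HLx : length xi = N) by (apply in_Omega_iff in Hxi; apply Hxi).
      unfold ind_eq at 2. destruct (list_eq_dec Nat.eq_dec xi s) as [E|E].
      * subst xi. unfold ind_eq, s. rewrite merge_split by (unfold nk in Hz; lia).
        destruct (list_eq_dec Nat.eq_dec eta eta); [ring|congruence].
      * destruct (Req_dec (rate psi_mult xi i j) 0) as [Hr|Hr]; [rewrite Hr; ring|].
        unfold ind_eq. destruct (list_eq_dec Nat.eq_dec (merge xi i j) eta) as [E2|E2]; [|ring].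
        exfalso. apply E. unfold s. rewrite <- E2. symmetry. apply split_merge; auto; lia.
Qed.

Definition Fd (b : nat -> R -> R) (t : R) (eta : list nat) (k0 : nat) : R :=
  INR (nk eta (S k0)) * b (S k0) t ^ pred (nk eta (S k0)) *
  (INR (S k0) ^ 2 * b (S k0) t + INR (S k0) * Sb b (S k0) t) /
  (INR (S k0) ^ nk eta (S k0) * INR (fact (nk eta (S k0)))).

Lemma deriv_div f l c t : derivable_pt_lim f t l -> derivable_pt_lim (fun s => f s / c) t (l / c).
Proof.
  intros H. replace (l / c) with (l * / c + f t * 0) by (unfold Rdiv; ring).
  apply (derivable_pt_lim_mult f (fun _ => / c)); auto. apply derivable_pt_lim_const.
Qed.

Lemma Fq_deriv b t eta k0 : is_b b -> 0 < t ->
  derivable_pt_lim (fun s => Fq b s eta k0) t (Fd b t eta k0).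
Proof.
  intros Hb Ht. unfold Fq, Gf, Fd. apply deriv_div.
  set (n := nk eta (S k0)).
  replace (INR n * b (S k0) t ^ pred n * (INR (S k0) ^ 2 * b (S k0) t + INR (S k0) * Sb b (S k0) t))
    with ((INR n * b (S k0) t ^ pred n) * (INR (S k0) ^ 2 * b (S k0) t + INR (S k0) * Sb b (S k0) t)) by ring.
  apply (derivable_pt_lim_comp (b (S k0)) (fun y => y ^ n)).
  - apply b_deriv; auto; lia.
  - apply derivable_pt_lim_pow.
Qed.

Lemma qf_deriv b N eta t : is_b b -> 0 < t ->
  derivable_pt_lim (fun s => qf b N s eta) t
   (INR (fact N) * (- (INR N ^ 2) * exp (- (INR N ^ 2) * t) * prodR (Fq b t eta) N
       + exp (- (INR N ^ 2) * t) *
         sumR (fun m0 => prodR (fun k => if Nat.eq_dec k m0 then Fd b t eta k else Fq b t eta k) N) N)).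
Proof.
  intros Hb Ht. unfold qf.
  set (D := sumR (fun m0 => prodR (fun k => if Nat.eq_dec k m0 then Fd b t eta k else Fq b t eta k) N) N).
  replace (INR (fact N) * (- (INR N ^ 2) * exp (- (INR N ^ 2) * t) * prodR (Fq b t eta) N
       + exp (- (INR N ^ 2) * t) * D)) with
    ((INR (fact N) * (- (INR N ^ 2) * exp (- (INR N ^ 2) * t))) * prodR (Fq b t eta) N +
     (INR (fact N) * exp (- (INR N ^ 2) * t)) * D) by ring.
  apply (derivable_pt_lim_mult (fun s => INR (fact N) * exp (- (INR N ^ 2) * s)) (fun s => prodR (Fq b s eta) N)).
  - apply (derivable_pt_lim_scal (fun s => exp (- (INR N ^ 2) * s))). apply dexp_lin'.
  - unfold D. apply (prodR_derive (fun s => Fq b s eta)). intros; apply Fq_deriv; auto.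
Qed.

Definition Zt (b : nat -> R -> R) (t : R) (eta : list nat) (k0 i : nat) : R :=
  INR (nk eta (S k0)) * b (S k0) t ^ pred (nk eta (S k0)) * INR (S k0) /
  (INR (S k0) ^ nk eta (S k0) * INR (fact (nk eta (S k0)))) * (b i t * b (S k0 - i)%nat t).

Lemma Fd_decomp b t eta k0 : Fd b t eta k0 =
  INR (S k0) ^ 2 * INR (nk eta (S k0)) * Fq b t eta k0 +
  sumR (fun i => if Nat.leb 1 i then Zt b t eta k0 i else 0) (S k0).
Proof.
  unfold Zt. set (n := nk eta (S k0)). set (c := INR (S k0) ^ n * INR (fact n)).
  set (X := INR n * b (S k0) t ^ pred n * INR (S k0) / c).
  rewrite (sumR_ext _ (fun i => X * (if Nat.leb 1 i then b i t * b (S k0 - i)%nat t else 0)))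
    by (intros; destruct (Nat.leb 1 i); ring).
  rewrite sumR_scal. fold (Sb b (S k0) t). unfold Fd, Fq, Gf, X. fold n. fold c.
  destruct n as [|n']; [simpl INR; unfold Rdiv; ring|].
  simpl pred. simpl pow. unfold Rdiv. ring.
Qed.

Lemma Dsum b N t eta : (1 <= N)%nat ->
  sumR (fun m0 => prodR (fun k => if Nat.eq_dec k m0 then Fd b t eta k else Fq b t eta k) N) N =
  sumR (fun m0 => INR (S m0) ^ 2 * INR (nk eta (S m0))) N * prodR (Fq b t eta) N +
  sumR (fun m0 => sumR (fun i => Wt b N t eta i (S m0 - i)) (S m0)) N.
Proof.
  intros HN. rewrite <- sumR_scal_r, <- sumR_plus. apply sumR_ext. intros m0 Hm0.
  rewrite (prodR_ext _ (fun k => if Nat.eq_dec k m0 then Fd b t eta m0 else Fq b t eta k))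
    by (intros k _; destruct (Nat.eq_dec k m0); subst; auto).
  rewrite prodR_upd by auto. rewrite Fd_decomp.
  set (E := exc (Fq b t eta) (fun k => Nat.eqb k m0) N).
  assert (HP : prodR (Fq b t eta) N = Fq b t eta m0 * E).
  { unfold E. rewrite <- prodR_upd by auto. apply prodR_ext. intros k _. destruct (Nat.eq_dec k m0); subst; auto. }
  rewrite HP. rewrite Rmult_plus_distr_r. f_equal; [ring|].
  rewrite <- sumR_scal_r. apply sumR_ext. intros i Hi.
  destruct (Nat.leb 1 i) eqn:E1.
  - apply Nat.leb_le in E1. unfold Wt.
    replace (Nat.leb 1 i && Nat.leb 1 (S m0 - i) && Nat.leb (i + (S m0 - i)) N)%bool with true
      by (symmetry; rewrite !andb_true_iff, !Nat.leb_le; lia).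
    replace (i + (S m0 - i) - 1)%nat with m0 by lia.
    rewrite prodR_upd by auto. fold E. f_equal.
    unfold Yv, Zt. replace (i + (S m0 - i))%nat with (S m0) by lia. unfold Rdiv; ring.
  - apply Nat.leb_gt in E1. assert (i = 0%nat) by lia. subst. unfold Wt. simpl. ring.
Qed.

Lemma sum_list_sumR2 (l : list (list nat)) (f : list nat -> nat -> nat -> R) n m :
  sum_list l (fun x => sumR (fun i => sumR (fun j => f x i j) m) n) =
  sumR (fun i => sumR (fun j => sum_list l (fun x => f x i j)) m) n.
Proof.
  rewrite (sum_list_sumR l (fun x i => sumR (fun j => f x i j) m)). apply sumR_ext. intros i _.
  apply (sum_list_sumR l (fun x j => f x i j)).
Qed.

Lemma Wt_sym b N t eta i j : Wt b N t eta i j = Wt b N t eta j i.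
Proof.
  unfold Wt. rewrite (Nat.add_comm j i).
  replace (Nat.leb 1 j && Nat.leb 1 i)%bool with (Nat.leb 1 i && Nat.leb 1 j)%bool by apply andb_comm.
  destruct (Nat.leb 1 i && Nat.leb 1 j && Nat.leb (i + j) N)%bool; [|auto].
  apply prodR_ext. intros k _. destruct (Nat.eq_dec k (i + j - 1)); auto.
  unfold Yv. rewrite (Nat.add_comm j i). unfold Rdiv; ring.
Qed.

Lemma forward b N eta t : is_b b -> (1 <= N)%nat -> In eta (Omega N) -> 0 < t ->
  derivable_pt_lim (fun s => qf b N s eta) t
    (sum_list (Omega N) (fun xi => qf b N t xi * Qgen psi_mult N xi eta)).
Proof.
  intros Hb HN HO Ht.
  set (C := INR (fact N) * exp (- (INR N ^ 2) * t)).
  set (P := prodR (Fq b t eta) N).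
  set (K := sumR (fun m0 => INR (S m0) ^ 2 * INR (nk eta (S m0))) N).
  set (WW := sumR (fun m0 => sumR (fun i => Wt b N t eta i (S m0 - i)) (S m0)) N).
  assert (Hq : qf b N t eta = C * P) by reflexivity.
  assert (HK : sumR (fun i => INR i ^ 2 * INR (nk eta i)) (S N) = K).
  { rewrite sumR_shift. simpl (INR 0). unfold K. ring. }
  assert (Hout : sum_list (Omega N) (fun xi => ind_eq xi eta *
            (qf b N t xi * sum_pairs N (fun i j => rate psi_mult xi i j))) = C * P * (INR N ^ 2 - K)).
  { rewrite sum_list_ind; auto using NoDup_Omega. rewrite lambda_eq, HK; auto. }
  assert (Hin : sum_list (Omega N) (fun xi => qf b N t xi *
       sum_pairs N (fun i j => rate psi_mult xi i j * ind_eq (merge xi i j) eta)) = C * WW).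
  { unfold sum_pairs.
    rewrite (sum_list_ext _ _ (fun xi => sumR (fun i => sumR (fun j =>
        if pair_ok N i j then qf b N t xi * (rate psi_mult xi i j * ind_eq (merge xi i j) eta) else 0) (S N)) (S N))).
    2:{ intros xi _. rewrite <- sumR_scal. apply sumR_ext. intros i _. rewrite <- sumR_scal.
        apply sumR_ext. intros j _. destruct (pair_ok N i j); ring. }
    rewrite sum_list_sumR2.
    rewrite (sumR_ext _ (fun i => sumR (fun j => if Nat.leb i j then cpair i j *
          (C * (if Nat.ltb (i + j) (S N) then Wt b N t eta i j else 0)) else 0) (S N))).
    2:{ intros i _. apply sumR_ext. intros j _.
        destruct (pair_ok N i j) eqn:Ep.
        - rewrite inflow; auto. apply pair_ok_iff in Ep.
          assert (Nat.leb i j = true) by (apply Nat.leb_le; lia). rewrite H.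
          assert (Nat.ltb (i + j) (S N) = true) by (apply Nat.ltb_lt; lia). rewrite H0. unfold C. ring.
        - rewrite sum_list_zero. destruct (Nat.leb i j) eqn:E1; [|auto].
          destruct (Nat.ltb (i + j) (S N)) eqn:E2; [|ring].
          apply Nat.leb_le in E1. apply Nat.ltb_lt in E2.
          assert (i = 0%nat).
          { destruct (Nat.eq_dec i 0); auto. exfalso.
            assert (pair_ok N i j = true) by (apply pair_ok_iff; lia). congruence. }
          subst. unfold Wt. simpl. ring. }
    rewrite (sumR_ext _ (fun i => C * sumR (fun j => if Nat.leb i j then cpair i j *
          (if Nat.ltb (i + j) (S N) then Wt b N t eta i j else 0) else 0) (S N))).
    2:{ intros i _. rewrite <- sumR_scal. apply sumR_ext. intros j _. destruct (Nat.leb i j); ring. }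
    rewrite sumR_scal. f_equal.
    rewrite <- (sym_sum (fun i j => if Nat.ltb (i + j) (S N) then Wt b N t eta i j else 0)).
    2:{ intros i j. rewrite (Nat.add_comm j i), Wt_sym. auto. }
    rewrite diag_sum. rewrite sumR_shift. unfold WW.
    assert (HW0 : forall j, Wt b N t eta 0 j = 0) by (intros; unfold Wt; simpl; auto).
    assert (HS1 : sumR (fun i => Wt b N t eta i (0 - i)) 1 = 0) by (simpl; rewrite HW0; ring).
    rewrite HS1, Rplus_0_l. apply sumR_ext. intros m0 _. rewrite sumR_S.
    replace (S m0 - S m0)%nat with 0%nat by lia. unfold Wt at 2.
    rewrite andb_false_r. simpl. ring. }
  replace (sum_list (Omega N) (fun xi => qf b N t xi * Qgen psi_mult N xi eta)) with
    (INR (fact N) * (- (INR N ^ 2) * exp (- (INR N ^ 2) * t) * prodR (Fq b t eta) N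
       + exp (- (INR N ^ 2) * t) *
         sumR (fun m0 => prodR (fun k => if Nat.eq_dec k m0 then Fd b t eta k else Fq b t eta k) N) N)).
  - apply qf_deriv; auto.
  - unfold Qgen.
    rewrite (sum_list_ext _ _ (fun xi => qf b N t xi *
       sum_pairs N (fun i j => rate psi_mult xi i j * ind_eq (merge xi i j) eta) +
       (-1) * (ind_eq xi eta * (qf b N t xi * sum_pairs N (fun i j => rate psi_mult xi i j)))))
      by (intros; ring).
    rewrite sum_list_plus, sum_list_scal, Hout, Hin.
    rewrite Dsum by auto. fold P K WW. unfold C. ring.
Qed.


Lemma b_at0 b k : is_b b -> (2 <= k)%nat -> b k 0 = 0.
Proof.
  intros [_ Hb] Hk. destruct (Hb k 0 Hk (Rle_refl 0)) as [pr Hpr]. rewrite Hpr, RiemannInt_P9. ring.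
Qed.

Lemma nth_init N p : (1 <= p)%nat -> nth p (init_state N) 0%nat = 0%nat.
Proof.
  intros Hp. unfold init_state. destruct p as [|p]; [lia|]. simpl. apply nth_repeat.
Qed.

Lemma length_init N : (1 <= N)%nat -> length (init_state N) = N.
Proof. intros. unfold init_state. simpl. rewrite repeat_length. lia. Qed.

Lemma qf_init b N x : is_b b -> (1 <= N)%nat -> In x (Omega N) ->
  qf b N 0 x = ind_eq x (init_state N).
Proof.
  intros Hb HN HO. assert (HL : length x = N) by (apply in_Omega_iff in HO; apply HO).
  unfold qf. rewrite Rmult_0_r, exp_0, Rmult_1_r.
  unfold ind_eq. destruct (list_eq_dec Nat.eq_dec x (init_state N)) as [E|E].
  - subst x. rewrite (prodR_split _ N 0) by lia.
    rewrite prodR_one.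
    + rewrite Fq_eta. replace (nth 0 (init_state N) 0%nat) with N by reflexivity. unfold Gf.
      rewrite (proj1 Hb 0) by lra. rewrite exp_0. replace (INR 1) with 1 by reflexivity. rewrite !pow1.
      field. apply INR_fact_nz.
    + intros k Hk. destruct (Nat.eq_dec k 0); [auto|]. unfold Fq, Gf. rewrite nk_nth, nth_init by lia.
      simpl. field.
  - destruct (classic (exists k0, (1 <= k0 < N)%nat /\ nth k0 x 0%nat <> 0%nat)) as [[k0 [Hk0 Hn]]|Hno].
    + assert (HF : Fq b 0 x k0 = 0).
      { unfold Fq, Gf. rewrite nk_nth, b_at0 by (auto; lia).
        destruct (nth k0 x 0%nat); [lia|]. simpl. unfold Rdiv; ring. }
      rewrite (prodR_zero _ N k0 ltac:(lia) HF). ring.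
    + exfalso. apply E. apply nth_ext with 0%nat 0%nat; [rewrite length_init; auto|].
      intros p Hp. rewrite HL in Hp.
      assert (Hz : forall k0, (1 <= k0 < N)%nat -> nth k0 x 0%nat = 0%nat).
      { intros k0 Hk0. destruct (Nat.eq_dec (nth k0 x 0%nat) 0); auto. exfalso; apply Hno; eauto. }
      destruct p as [|p].
      * unfold init_state. simpl nth.
        apply in_Omega_iff in HO. destruct HO as [_ HW].
        pose proof (weight_sumR x) as W. rewrite HW, HL in W.
        destruct N as [|N']; [lia|]. rewrite sumR_shift in W.
        rewrite sumR_zero in W.
        -- cbv beta in W. change (INR (S 0)) with 1 in W. apply INR_eq. lra.
        -- intros k Hk. rewrite Hz by lia. simpl; ring.
      * rewrite nth_init by lia. apply Hz. lia.
Qed.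

Lemma Rmax0_cont : continuity_pt (fun s => Rmax 0 s) 0.
Proof.
  apply (lip_cont _ 0 1); [lra|]. intros s Hs. rewrite (Rmax_left 0 0) by lra. rewrite !Rminus_0_r.
  unfold Rmax; destruct (Rle_dec 0 s); rewrite ?Rabs_R0; unfold Rabs; destruct (Rcase_abs s); lra.
Qed.

Lemma qh_cont0 b N x : is_b b ->
  continuity_pt (fun s => qf b N (Rmax 0 s) x) 0.
Proof.
  intros Hb. unfold qf.
  apply (continuity_pt_mult (fun s => INR (fact N) * exp (- (INR N ^ 2) * Rmax 0 s))
           (fun s => prodR (Fq b (Rmax 0 s) x) N)).
  - apply (continuity_pt_mult (fun _ => INR (fact N)) (fun s => exp (- (INR N ^ 2) * Rmax 0 s))).
    + apply continuity_pt_const. intros ? ?; reflexivity.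
    + apply (continuity_pt_comp (fun s => Rmax 0 s) (fun y => exp (- (INR N ^ 2) * y))).
      * apply Rmax0_cont.
      * apply derivable_continuous_pt. eexists. apply dexp_lin'.
  - apply (prodR_cont (fun s => Fq b (Rmax 0 s) x)). intros k0 _. unfold Fq, Gf.
    apply (continuity_pt_mult (fun s => b (S k0) (Rmax 0 s) ^ nk x (S k0)) (fun _ => / (INR (S k0) ^ nk x (S k0) * INR (fact (nk x (S k0)))))).
    + apply (continuity_pt_comp (fun s => b (S k0) (Rmax 0 s)) (fun y => y ^ nk x (S k0))).
      * apply bmax_cont0; auto; lia.
      * apply derivable_continuous_pt. eexists. apply derivable_pt_lim_pow.
    + apply continuity_pt_const. intros ? ?; reflexivity.
Qed.

Theorem mainTheorem6 :
  forall b : nat -> R -> R, is_b b ->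
  forall (N : nat), (1 <= N)%nat ->
  forall p : R -> list nat -> R, is_law psi_mult N (init_state N) p ->
  forall (t : R) (eta : list nat), 0 <= t -> in_Omega N eta ->
    p t eta =
      INR (fact N) * exp (- (INR N ^ 2) * t) *
      prodR (fun k0 => let k := S k0 in
               b k t ^ nk eta k / (INR k ^ nk eta k * INR (fact (nk eta k)))) N.
Proof.
  intros b Hb N HN p [Hp0 Hpd] t eta Ht Heta.
  change (p t eta = qf b N t eta).
  apply in_Omega_iff in Heta.
  set (d := fun s x => p s x - qf b N (Rmax 0 s) x).
  assert (Hd : forall x, In x (Omega N) -> d t x = 0).
  { intros x Hx. apply (ode_uniq (Omega N) (Qgen psi_mult N) d); auto.
    - intros y c Hy Hc. unfold d.
      replace (sum_list (Omega N) (fun y0 => (p c y0 - qf b N (Rmax 0 c) y0) * Qgen psi_mult N y0 y)) with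
        (sum_list (Omega N) (fun y0 => p c y0 * Qgen psi_mult N y0 y) -
         sum_list (Omega N) (fun y0 => qf b N c y0 * Qgen psi_mult N y0 y)).
      2:{ rewrite Rmax_right by lra.
          rewrite (sum_list_ext _ (fun y0 => (p c y0 - qf b N c y0) * Qgen psi_mult N y0 y) (fun y0 => p c y0 * Qgen psi_mult N y0 y + (-1) * (qf b N c y0 * Qgen psi_mult N y0 y)))
            by (intros; ring).
          rewrite sum_list_plus, sum_list_scal. ring. }
      apply (derivable_pt_lim_minus (fun s => p s y) (fun s => qf b N (Rmax 0 s) y)).
      + apply Hpd; auto.
      + apply (derivable_pt_lim_locally_ext (fun s => qf b N s y) _ c 0 (c + 1)); [lra| |].
        * intros z Hz. rewrite Rmax_right by lra. auto.
        * apply forward; auto.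
    - intros y Hy. unfold d.
      apply (continuity_pt_minus (fun s => p s y) (fun s => qf b N (Rmax 0 s) y)).
      + apply derivable_continuous_pt. eexists. apply Hpd; auto.
      + apply qh_cont0; auto.
    - intros y Hy. unfold d. rewrite Hp0 by auto. rewrite Rmax_left by lra.
      rewrite qf_init; auto. ring. }
  pose proof (Hd eta Heta). unfold d in H. rewrite Rmax_right in H by lra. lra.
Qed.
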